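(* Let $(X,d)$ be a compact metric space with the $E_{1,0}$-property. Then $(X,d)$ has the $E_{1,g}$-property.
   Context: Local slope: $s[u](\bar x):=\limsup_{x\to\bar x}\frac{\max\{u(\bar x)-u(x),0\}}{d(\bar x,x)}$ (zero if $\bar x$ isolated), computed in $\overline\Omega$ for $u:\overline\Omega\to\mathbb{R}$. For nonempty open $\Omega\subsetneq X$, bounded continuous $\ell:\Omega\to\mathbb{R}$, $g:\partial\Omega\to\mathbb{R}$ satisfy (CC) if for all $x,y\in\partial\Omega$, $g(x)-g(y)\le\inf\{\int_0^T\ell(\gamma(t))dt\}$ over $1$-Lipschitz $\gamma:[0,T]\to\overline\Omega$ with $\gamma(0)=y$, $\gamma(T)=x$, $\gamma((0,T))\subset\Omega$ ($\inf\emptyset=+\infty$). $(X,d)$ has the $E_{1,0}$-property if for every nonempty open $\Omega\subsetneq X$ there is a continuous $u:\overline\Omega\to\mathbb{R}$ with $s[u]=1$ on $\Omega$ and $u=0$ on $\partial\Omega$. $(X,d)$ has the $E_{1,g}$-property if for every nonempty open $\Omega\subsetneq X$ and every bounded continuous $g:\partial\Omega\to\mathbb{R}$ such that $(\ell\equiv1,g)$ satisfies (CC), there is a continuous $u:\overline\Omega\to\mathbb{R}$ with $s[u]=1$ on $\Omega$ and $u=g$ on $\partial\Omega$. *)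

(* Defs.v *)
From Stdlib Require Import Reals List.
From Coquelicot Require Import Coquelicot.
Open Scope R_scope.

Section MetricDefs.
Variable X : Type.
Variable d : X -> X -> R.

Definition is_metric : Prop :=
  (forall x y, 0 <= d x y) /\
  (forall x y, d x y = 0 <-> x = y) /\
  (forall x y, d x y = d y x) /\
  (forall x y z, d x z <= d x y + d y z).

Definition is_open (U : X -> Prop) : Prop :=
  forall x, U x -> exists r, 0 < r /\ forall y, d x y < r -> U y.

Definition closure (U : X -> Prop) (x : X) : Prop :=
  forall r, 0 < r -> exists y, U y /\ d x y < r.

Definition boundary (U : X -> Prop) (x : X) : Prop :=
  closure U x /\ closure (fun y => ~ U y) x.

Definition compact_space : Prop :=
  forall (I : Type) (V : I -> X -> Prop),
    (forall i, is_open (V i)) -> (forall x, exists i, V i x) ->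
    exists l : list I, forall x, exists i, In i l /\ V i x.

Definition continuous_on (A : X -> Prop) (f : X -> R) : Prop :=
  forall x, A x -> forall eps, 0 < eps -> exists delta, 0 < delta /\
    forall y, A y -> d x y < delta -> Rabs (f x - f y) < eps.

Definition bounded_on (A : X -> Prop) (f : X -> R) : Prop :=
  exists M, forall x, A x -> Rabs (f x) <= M.

(* The value 0 is added to each sup set: since the
   quotients are >= 0 this does not change the sup when the punctured ball
   meets cl Omega, and it yields 0 when xb is isolated. *)
Definition slope_sup (Omega : X -> Prop) (u : X -> R) (xb : X) (r : R) : Rbar :=
  Rbar_lub (fun v : Rbar => v = Finite 0 \/
    exists x, closure Omega x /\ 0 < d xb x < r /\
      v = Finite (Rmax (u xb - u x) 0 / d xb x)).

Definition local_slope (Omega : X -> Prop) (u : X -> R) (xb : X) : Rbar :=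
  Rbar_glb (fun w : Rbar => exists r, 0 < r /\ w = slope_sup Omega u xb r).

Definition admissible_curve (Omega : X -> Prop) (y x : X) (T : R) (gamma : R -> X) : Prop :=
  0 <= T /\
  (forall s t, 0 <= s <= T -> 0 <= t <= T -> d (gamma s) (gamma t) <= Rabs (s - t)) /\
  (forall t, 0 <= t <= T -> closure Omega (gamma t)) /\
  gamma 0 = y /\ gamma T = x /\
  (forall t, 0 < t < T -> Omega (gamma t)).

(* compatibility condition (CC) for (l, g); inf of the empty set is +oo
   (Rbar_glb of the empty set is p_infty) *)
Definition CC (Omega : X -> Prop) (l g : X -> R) : Prop :=
  forall x y, boundary Omega x -> boundary Omega y ->
    Rbar_le (Finite (g x - g y))
      (Rbar_glb (fun v : Rbar => exists T gamma,
         admissible_curve Omega y x T gamma /\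
         v = Finite (RInt (fun t => l (gamma t)) 0 T))).

Definition nonempty_proper_open (Omega : X -> Prop) : Prop :=
  is_open Omega /\ (exists x, Omega x) /\ (exists x, ~ Omega x).

Definition E10_property : Prop :=
  forall Omega, nonempty_proper_open Omega ->
    exists u : X -> R,
      continuous_on (closure Omega) u /\
      (forall x, Omega x -> local_slope Omega u x = Finite 1) /\
      (forall x, boundary Omega x -> u x = 0).

Definition E1g_property : Prop :=
  forall Omega, nonempty_proper_open Omega ->
    forall g : X -> R,
      bounded_on (boundary Omega) g -> continuous_on (boundary Omega) g ->
      CC Omega (fun _ => 1) g ->
      exists u : X -> R,
        continuous_on (closure Omega) u /\
        (forall x, Omega x -> local_slope Omega u x = Finite 1) /\
        (forall x, boundary Omega x -> u x = g x).

End MetricDefs.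

(* Main.v *)
Require Import Defs.
From Stdlib Require Import Reals Lra Lia List Classical ClassicalEpsilon.
From Coquelicot Require Import Coquelicot.
Require Import Defs.
Open Scope R_scope.

Section Gen.
Variable X : Type.
Variable d : X -> X -> R.
Hypothesis Hm : is_metric X d.

Lemma d_pos x y : 0 <= d x y. Proof. apply Hm. Qed.
Lemma d_sym x y : d x y = d y x. Proof. apply Hm. Qed.
Lemma d_tri x y z : d x z <= d x y + d y z. Proof. apply Hm. Qed.
Lemma d_refl x : d x x = 0. Proof. apply Hm; reflexivity. Qed.
Lemma d_eq x y : d x y = 0 -> x = y. Proof. apply Hm. Qed.

Lemma closure_incl (U : X -> Prop) x : U x -> closure X d U x.
Proof. intros Hx r Hr. exists x. rewrite d_refl. auto. Qed.

Lemma closure_closure (U : X -> Prop) x : closure X d (closure X d U) x -> closure X d U x.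
Proof.
  intros H r Hr. destruct (H (r/2) ltac:(lra)) as [y [Hy Hd]].
  destruct (Hy (r/2) ltac:(lra)) as [z [Hz Hd']]. exists z; split; auto.
  pose proof (d_tri x y z). lra.
Qed.

Lemma closure_mono (U V : X -> Prop) x : (forall y, U y -> V y) -> closure X d U x -> closure X d V x.
Proof. intros HUV H r Hr. destruct (H r Hr) as [y [Hy Hd]]. exists y; auto. Qed.

Lemma open_compl_closed (U : X -> Prop) x : is_open X d U -> closure X d (fun y => ~ U y) x -> ~ U x.
Proof.
  intros HU H Hx. destruct (HU x Hx) as [r [Hr Hb]].
  destruct (H r Hr) as [y [Hy Hd]]. apply Hy, Hb, Hd.
Qed.

Lemma boundary_iff (U : X -> Prop) x : is_open X d U ->
  (boundary X d U x <-> closure X d U x /\ ~ U x).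
Proof.
  intro HU. split.
  - intros [H1 H2]. split; auto. apply (open_compl_closed U x HU H2).
  - intros [H1 H2]. split; auto. apply closure_incl; auto.
Qed.

Lemma ball_open x r : is_open X d (fun y => d x y < r).
Proof.
  intros y Hy. exists (r - d x y). split. lra.
  intros z Hz. pose proof (d_tri x y z). lra.
Qed.

Definition choose_or (P : X -> Prop) (dflt : X) : X :=
  match excluded_middle_informative (exists x, P x) with
  | left H => proj1_sig (constructive_indefinite_description P H)
  | right _ => dflt
  end.

Lemma choose_or_spec P dflt : (exists x, P x) -> P (choose_or P dflt).
Proof.
  intro H. unfold choose_or. destruct (excluded_middle_informative _) as [H'|H'].
  - apply proj2_sig.
  - contradiction.
Qed.

Hypothesis Hc : compact_space X d.

Fixpoint maxN {I : Type} (N : I -> nat) (l : list I) : nat :=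
  match l with nil => 0%nat | cons i l' => Nat.max (N i) (maxN N l') end.

Lemma maxN_spec {I : Type} (N : I -> nat) l i : In i l -> (N i <= maxN N l)%nat.
Proof.
  induction l as [|j l IH]; simpl; [tauto|].
  intros [->|H]; [lia|]. specialize (IH H). lia.
Qed.

Lemma cluster (a : nat -> X) :
  exists p, forall e, 0 < e -> forall N, exists n, (N <= n)%nat /\ d (a n) p < e.
Proof.
  apply NNPP. intro H.
  assert (H' : forall p, exists e N, 0 < e /\ forall n, (N <= n)%nat -> e <= d (a n) p).
  { intro p. apply NNPP. intro Hp. apply H. exists p. intros e He N.
    apply NNPP. intro Hn. apply Hp. exists e, N. split; auto.
    intros n Hn'. apply Rnot_lt_le. intro Hlt. apply Hn. exists n; auto. }
  set (I := {p : X & {e : R & {N : nat | 0 < e /\ forall n, (N <= n)%nat -> e <= d (a n) p}}}).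
  set (V := fun (i : I) (y : X) => d (projT1 i) y < projT1 (projT2 i)).
  destruct (Hc I V) as [l Hl].
  - intro i. apply ball_open.
  - intro x. destruct (H' x) as [e [N [He HN]]].
    exists (existT _ x (existT _ e (exist _ N (conj He HN)))).
    unfold V; simpl. rewrite d_refl. auto.
  - set (NN := fun i : I => proj1_sig (projT2 (projT2 i))).
    destruct (Hl (a (maxN NN l))) as [i [Hi HV]].
    pose proof (maxN_spec NN l i Hi) as Hmax.
    unfold V in HV. unfold NN in Hmax.
    pose proof (proj2 (proj2_sig (projT2 (projT2 i))) _ Hmax) as HN.
    rewrite (d_sym (a _)) in HN. unfold NN in HV. lra.
Qed.

End Gen.


Lemma le_eps a b : (forall e, 0 < e -> a <= b + e) -> a <= b.
Proof.
  intro H. apply Rnot_lt_le. intro Hlt. specialize (H ((a - b)/2) ltac:(lra)). lra.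
Qed.

Lemma hN_small e : 0 < e -> exists N, forall n, (N <= n)%nat -> / INR (S n) < e.
Proof.
  intro He. destruct (archimed_cor1 e He) as [N [HN HN0]]. exists N. intros n Hn.
  apply Rle_lt_trans with (/ INR N); auto.
  apply Rinv_le_contravar. apply lt_0_INR; lia. apply le_INR; lia.
Qed.

Lemma hN_pos n : 0 < / INR (S n).
Proof. apply Rinv_0_lt_compat, lt_0_INR; lia. Qed.

Lemma hN_mono n m : (n <= m)%nat -> / INR (S m) <= / INR (S n).
Proof. intro H. apply Rinv_le_contravar. apply lt_0_INR; lia. apply le_INR; lia. Qed.

Lemma pow2_ge n : INR (S n) <= 2 ^ n.
Proof.
  induction n. simpl. lra. rewrite !S_INR in *. simpl. pose proof (pos_INR n). lra.
Qed.

Lemma pow2_pos n : 0 < 2 ^ n.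
Proof. apply pow_lt; lra. Qed.

Lemma pow2_small a e : 0 <= a -> 0 < e -> exists N, forall n, (N <= n)%nat -> a / 2 ^ n < e.
Proof.
  intros Ha He. destruct (hN_small (e / (a + 1))) as [N HN].
  { apply Rdiv_lt_0_compat; lra. }
  exists N. intros n Hn. specialize (HN n Hn). pose proof (pow2_ge n). pose proof (pow2_pos n).
  pose proof (lt_0_INR (S n) ltac:(lia)).
  apply Rle_lt_trans with (a / INR (S n)).
  - unfold Rdiv. apply Rmult_le_compat_l; auto. apply Rinv_le_contravar; lra.
  - apply Rlt_le_trans with ((a+1) / INR (S n)).
    + unfold Rdiv. apply Rmult_lt_compat_r. apply Rinv_0_lt_compat; lra. lra.
    + assert (/ INR (S n) <= e / (a+1)) by lra.
      unfold Rdiv. apply Rle_trans with ((a+1) * (e / (a+1))).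
      apply Rmult_le_compat_l; lra. right. field. lra.
Qed.

Lemma inf_exists (E : R -> Prop) :
  (exists r, E r) -> (exists M, forall r, E r -> M <= r) ->
  exists a, (forall r, E r -> a <= r) /\ (forall e, 0 < e -> exists r, E r /\ r < a + e).
Proof.
  intros [r0 Hr0] [M HM].
  destruct (Glb_Rbar_correct E) as [Hlb Hg].
  assert (H1 : Rbar_le (Glb_Rbar E) r0) by (apply Hlb; auto).
  assert (H2 : Rbar_le M (Glb_Rbar E)) by (apply Hg; intros r Hr; simpl; apply HM; auto).
  destruct (Glb_Rbar E) as [a| |] eqn:Ha; simpl in H1, H2; try contradiction.
  exists a. split.
  - intros r Hr. specialize (Hlb r Hr). simpl in Hlb. auto.
  - intros e He. apply NNPP. intro Hn.
    assert (Rbar_le (a + e) a).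
    { apply Hg. intros r Hr. simpl. apply Rnot_lt_le. intro. apply Hn. exists r; auto. }
    simpl in H. lra.
Qed.

Lemma sup_exists (E : R -> Prop) :
  (exists r, E r) -> (exists M, forall r, E r -> r <= M) ->
  exists a, (forall r, E r -> r <= a) /\ (forall e, 0 < e -> exists r, E r /\ a - e < r).
Proof.
  intros [r0 Hr0] [M HM].
  destruct (inf_exists (fun r => E (- r))) as [a [H1 H2]].
  - exists (- r0). rewrite Ropp_involutive. auto.
  - exists (- M). intros r Hr. specialize (HM _ Hr). lra.
  - exists (- a). split.
    + intros r Hr. specialize (H1 (- r)). rewrite Ropp_involutive in H1. specialize (H1 Hr). lra.
    + intros e He. destruct (H2 e He) as [r [Hr Hlt]]. exists (- r). split; auto. lra.
Qed.


Section Slope.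
Variable X : Type.
Variable d : X -> X -> R.
Variable Om : X -> Prop.
Variable u : X -> R.
Variable xb : X.

Let S r := (fun v : Rbar => v = Finite 0 \/
    exists x, closure X d Om x /\ 0 < d xb x < r /\
      v = Finite (Rmax (u xb - u x) 0 / d xb x)).
Let W := (fun w : Rbar => exists r, 0 < r /\ w = slope_sup X d Om u xb r).

Lemma slope_sup_glb : Rbar_is_glb W (local_slope X d Om u xb).
Proof. exact (proj2_sig (Rbar_ex_glb W)). Qed.

Lemma slope_sup_lub r : Rbar_is_lub (S r) (slope_sup X d Om u xb r).
Proof. exact (proj2_sig (Rbar_ex_lub (S r))). Qed.

Lemma slope_ge : local_slope X d Om u xb = Finite 1 ->
  forall r, 0 < r -> forall c, 0 < c < 1 ->
  exists x, closure X d Om x /\ 0 < d xb x < r /\ c * d xb x < u xb - u x.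
Proof.
  intros H1 r Hr c Hc. apply NNPP. intro Hn.
  destruct slope_sup_glb as [Hlb _]. rewrite H1 in Hlb.
  assert (HL : Rbar_le 1 (slope_sup X d Om u xb r)) by (apply Hlb; exists r; auto).
  destruct (slope_sup_lub r) as [_ Hl].
  assert (HU : Rbar_le (slope_sup X d Om u xb r) c).
  { apply Hl. intros v [->|[x [Hx [Hd ->]]]]; simpl. lra.
    assert (u xb - u x <= c * d xb x).
    { apply Rnot_lt_le. intro. apply Hn. exists x; auto. }
    apply Rle_div_l. lra. unfold Rmax. destruct (Rle_dec _ _); nra. }
  pose proof (Rbar_le_trans _ _ _ HL HU). simpl in H. lra.
Qed.

Lemma slope_le : local_slope X d Om u xb = Finite 1 ->
  forall c, 1 < c -> exists r, 0 < r /\ forall x, closure X d Om x -> 0 < d xb x < r ->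
  u xb - u x <= c * d xb x.
Proof.
  intros H1 c Hc. apply NNPP. intro Hn.
  destruct slope_sup_glb as [_ Hg]. rewrite H1 in Hg.
  assert (Rbar_le c 1).
  { apply Hg. intros w [r [Hr ->]].
    destruct (slope_sup_lub r) as [Hu _].
    apply NNPP. intro Hnl. apply Hn. exists r. split; auto.
    intros x Hx Hd. apply Rnot_lt_le. intro Hlt.
    apply Hnl. eapply Rbar_le_trans; [|apply Hu; right; exists x; split; [exact Hx|split; [exact Hd|reflexivity]]].
    simpl. apply Rle_div_r. lra. unfold Rmax. destruct (Rle_dec _ _); nra. }
  simpl in H. lra.
Qed.

Lemma slope_eq :
  (forall r, 0 < r -> forall c, 0 < c < 1 ->
    exists x, closure X d Om x /\ 0 < d xb x < r /\ c * d xb x < u xb - u x) ->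
  (forall c, 1 < c -> exists r, 0 < r /\ forall x, closure X d Om x -> 0 < d xb x < r ->
    u xb - u x <= c * d xb x) ->
  local_slope X d Om u xb = Finite 1.
Proof.
  intros Hge Hle. unfold local_slope. apply Rbar_is_glb_unique. split.
  - intros w [r [Hr ->]]. destruct (slope_sup_lub r) as [Hu _].
    destruct (Rbar_le_lt_dec 1 (slope_sup X d Om u xb r)) as [Hle1|Hlt]; auto.
    exfalso.
    assert (H0 : Rbar_le 0 (slope_sup X d Om u xb r)) by (apply Hu; left; auto).
    destruct (slope_sup X d Om u xb r) as [L| |] eqn:HL; simpl in Hlt, H0; try contradiction.
    destruct (Hge r Hr ((L+1)/2) ltac:(lra)) as [x [Hx [Hd Hlt2]]].
    assert (Rbar_le (Rmax (u xb - u x) 0 / d xb x) L).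
    { apply Hu. right. exists x; auto. }
    simpl in H. apply Rle_div_l in H; [|lra].
    unfold Rmax in H. destruct (Rle_dec _ _); nra.
  - intros b Hb. destruct (Rbar_le_lt_dec b 1) as [|Hlt]; auto. exfalso.
    set (c := match b with Finite b' => (1 + b') / 2 | _ => 2 end).
    assert (Hc1 : 1 < c) by (unfold c; destruct b; simpl in Hlt; try lra; contradiction).
    assert (Hcb : Rbar_lt c b) by (unfold c; destruct b; simpl in *; try lra; auto).
    destruct (Hle c Hc1) as [r [Hr Hr']].
    assert (Rbar_le (slope_sup X d Om u xb r) c).
    { destruct (slope_sup_lub r) as [_ Hl]. apply Hl.
      intros v [->|[x [Hx [Hd ->]]]]; simpl. lra.
      specialize (Hr' x Hx Hd). apply Rle_div_l. lra. unfold Rmax. destruct (Rle_dec _ _); nra. }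
    assert (Rbar_le b (slope_sup X d Om u xb r)) by (apply Hb; exists r; auto).
    pose proof (Rbar_le_trans _ _ _ H0 H). destruct b; simpl in *; try lra; auto.
Qed.
End Slope.


Section Descent.
Variable X : Type.
Variable d : X -> X -> R.
Hypothesis Hm : is_metric X d.
Hypothesis Hc : compact_space X d.
Variable Om : X -> Prop.
Variable v : X -> R.
Variable c : R.
Hypothesis HO : is_open X d Om.
Hypothesis Hv : continuous_on X d (closure X d Om) v.
Hypothesis Hs : forall p, Om p -> forall r, 0 < r -> forall c', 0 < c' < 1 ->
  exists q, closure X d Om q /\ 0 < d p q < r /\ c' * d p q < v p - v q.
Hypothesis Hc01 : 0 < c < 1.

Let K := closure X d Om.
Let ds := d_sym X d Hm.
Let dr := d_refl X d Hm.
Let dt := d_tri X d Hm.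
Let dpos := d_pos X d Hm.

Lemma K_closed x : closure X d K x -> K x.
Proof. apply closure_closure; auto. Qed.

Lemma cluster_K (a : nat -> X) : (forall n, K (a n)) ->
  exists p, K p /\ forall e, 0 < e -> forall N, exists n, (N <= n)%nat /\ d (a n) p < e.
Proof.
  intro Ha. destruct (cluster X d Hm Hc a) as [p Hp]. exists p. split; auto.
  apply K_closed. intros r Hr. destruct (Hp r Hr 0%nat) as [n [_ Hn]].
  exists (a n). split; auto. rewrite ds; auto.
Qed.

Lemma cont_K p e : K p -> 0 < e -> exists dl, 0 < dl /\ forall y, K y -> d p y < dl -> Rabs (v p - v y) < e.
Proof. intros Hp He. apply Hv; auto. Qed.

Lemma v_bounded_below : exists M, forall y, K y -> M <= v y.
Proof.
  apply NNPP. intro Hn.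
  assert (H : forall n : nat, exists y, K y /\ v y < - INR n).
  { intro n. apply NNPP. intro Hn'. apply Hn. exists (- INR n). intros y Hy.
    apply Rnot_lt_le. intro. apply Hn'. exists y; auto. }
  set (a := fun n => proj1_sig (constructive_indefinite_description _ (H n))).
  assert (Ha : forall n, K (a n) /\ v (a n) < - INR n) by (intro n; apply (proj2_sig (constructive_indefinite_description _ (H n)))).
  destruct (cluster_K a (fun n => proj1 (Ha n))) as [p [Hp Hcl]].
  destruct (cont_K p 1 Hp ltac:(lra)) as [dl [Hdl Hcont]].
  destruct (INR_archimed 1 (Rabs (v p) + 1) ltac:(lra)) as [N HN].
  destruct (Hcl dl Hdl N) as [n [Hnn Hd]].
  specialize (Hcont (a n) (proj1 (Ha n))). rewrite ds in Hcont. specialize (Hcont Hd).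
  pose proof (proj2 (Ha n)). pose proof (le_INR _ _ Hnn).
  pose proof (Rle_abs (- v p)). rewrite Rabs_Ropp in H2.
  apply Rabs_def2 in Hcont. lra.
 
Qed.

Definition chain (h : R) (n : nat) (f : nat -> X) : Prop :=
  (forall i, (i <= n)%nat -> K (f i)) /\
  (forall i, (i < n)%nat -> d (f i) (f (S i)) <= h /\
     c * d (f i) (f (S i)) <= v (f i) - v (f (S i)) /\ v (f i) - v (f (S i)) <= h).

Lemma chain_mono h h' n f : h <= h' -> chain h n f -> chain h' n f.
Proof.
  intros Hh [H1 H2]. split; auto. intros i Hi. destruct (H2 i Hi) as [A [B C]]. repeat split; lra.
Qed.

Lemma chain_trunc h n f i : (i <= n)%nat -> chain h n f -> chain h i f.
Proof.
  intros Hi [H1 H2]. split. intros j Hj; apply H1; lia. intros j Hj; apply H2; lia.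
Qed.

Lemma chain_shift h n f i : (i <= n)%nat -> chain h n f -> chain h (n - i) (fun j => f (i + j)%nat).
Proof.
  intros Hi [H1 H2]. split.
  - intros j Hj. apply H1. lia.
  - intros j Hj. replace (i + S j)%nat with (S (i + j)) by lia. apply H2. lia.
Qed.

Lemma chain_tele h n f : chain h n f -> c * d (f 0%nat) (f n) <= v (f 0%nat) - v (f n).
Proof.
  intros [H1 H2].
  assert (forall k, (k <= n)%nat -> c * d (f 0%nat) (f k) <= v (f 0%nat) - v (f k)).
  { induction k; intro Hk.
    - rewrite dr; auto. lra.
    - destruct (H2 k ltac:(lia)) as [A [B C]]. specialize (IHk ltac:(lia)).
      pose proof (dt (f 0%nat) (f k) (f (S k))). nra. }
  apply H; lia.
Qed.

Definition Qr (p q : X) : Prop :=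
  forall h, 0 < h -> exists n f, chain h n f /\ d (f 0%nat) p < h /\ d (f n) q < h.

Lemma Qr_K p q : Qr p q -> K p /\ K q.
Proof.
  intro H. split; apply K_closed; intros r Hr; destruct (H r Hr) as [n [f [[H1 _] [Hp Hq]]]].
  - exists (f 0%nat). split. apply H1; lia. rewrite ds; auto.
  - exists (f n). split. apply H1; lia. rewrite ds; auto.
Qed.

Lemma Qr_dist p q : Qr p q -> c * d p q <= v p - v q.
Proof.
  intro H. destruct (Qr_K p q H) as [Kp Kq].
  apply le_eps. intros e He.
  destruct (cont_K p (e/4) Kp ltac:(lra)) as [dp [Hdp Hcp]].
  destruct (cont_K q (e/4) Kq ltac:(lra)) as [dq [Hdq Hcq]].
  set (h := Rmin (e/4) (Rmin dp dq)).
  assert (Hh : 0 < h) by (unfold h; repeat apply Rmin_pos; lra).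
  destruct (H h Hh) as [n [f [Hch [H0 Hn]]]].
  pose proof (chain_tele h n f Hch) as Htele.
  destruct Hch as [HK _].
  assert (h <= e/4 /\ h <= dp /\ h <= dq) as [h1 [h2 h3]].
  { unfold h. repeat split. apply Rmin_l. eapply Rle_trans; [apply Rmin_r|apply Rmin_l].
    eapply Rle_trans; [apply Rmin_r|apply Rmin_r]. }
  specialize (Hcp (f 0%nat) (HK 0%nat ltac:(lia))). rewrite ds in Hcp. specialize (Hcp ltac:(lra)).
  specialize (Hcq (f n) (HK n ltac:(lia))). rewrite ds in Hcq. specialize (Hcq ltac:(lra)).
  apply Rabs_def2 in Hcp. apply Rabs_def2 in Hcq.
  pose proof (dt p (f 0%nat) q) as T1. pose proof (dt (f 0%nat) (f n) q) as T2.
  rewrite (ds p (f 0%nat)) in T1. pose proof (dpos (f 0%nat) (f n)) as T3.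
  assert (d p q <= 2 * h + d (f 0%nat) (f n)) by lra.
  assert (c * d p q <= c * (2*h) + c * d (f 0%nat) (f n)) by nra.
  nra.
Qed.

Lemma abs_small_eq a b : (forall e, 0 < e -> Rabs (a - b) < e) -> a = b.
Proof.
  intro H. destruct (Req_dec a b) as [|Hne]; auto. exfalso.
  specialize (H (Rabs (a - b)) ltac:(apply Rabs_pos_lt; lra)). lra.
Qed.

Lemma discrete_ivt : forall n (f : nat -> X) h lam, 0 <= h ->
  (forall i, (i < n)%nat -> 0 <= v (f i) - v (f (S i)) <= h) ->
  v (f n) <= lam <= v (f 0%nat) -> exists i, (i <= n)%nat /\ Rabs (v (f i) - lam) <= h.
Proof.
  induction n; intros f h lam Hh0 Hst Hb.
  - exists 0%nat. split; auto. rewrite Rabs_right; lra.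
  - destruct (Rle_dec (v (f 1%nat)) lam) as [Hl|Hl].
    + exists 0%nat. split; [lia|]. destruct (Hst 0%nat ltac:(lia)).
      rewrite Rabs_right; lra.
    + destruct (IHn (fun j => f (S j)) h lam Hh0) as [i [Hi Hi']].
      * intros i Hi. apply Hst. lia.
      * lra.
      * exists (S i). split; [lia|auto].
Qed.

Lemma Qr_mid p q lam : Qr p q -> v q <= lam <= v p ->
  exists m, v m = lam /\ Qr p m /\ Qr m q.
Proof.
  intros HQ Hlam. destruct (Qr_K p q HQ) as [Kp Kq].
  assert (H : forall k : nat, exists m, exists n f i, chain (/ INR (S k)) n f /\
     d (f 0%nat) p < / INR (S k) /\ d (f n) q < / INR (S k) /\ (i <= n)%nat /\ m = f i /\
     Rabs (v m - lam) <= / INR (S k)).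
  { intro k. set (hk := / INR (S k)). assert (Hhk : 0 < hk) by apply hN_pos.
    destruct (cont_K p hk Kp Hhk) as [dp0 [Hdp Hcp]].
    destruct (cont_K q hk Kq Hhk) as [dq0 [Hdq Hcq]].
    set (h := Rmin hk (Rmin dp0 dq0)).
    assert (Hh : 0 < h) by (unfold h; repeat apply Rmin_pos; lra).
    assert (h <= hk /\ h <= dp0 /\ h <= dq0) as [h1 [h2 h3]].
    { unfold h. repeat split. apply Rmin_l. eapply Rle_trans; [apply Rmin_r|apply Rmin_l].
      eapply Rle_trans; [apply Rmin_r|apply Rmin_r]. }
    destruct (HQ h Hh) as [n [f [Hch [H0 Hn]]]].
    pose proof Hch as [HK Hst].
    specialize (Hcp (f 0%nat) (HK 0%nat ltac:(lia))). rewrite ds in Hcp. specialize (Hcp ltac:(lra)).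
    specialize (Hcq (f n) (HK n ltac:(lia))). rewrite ds in Hcq. specialize (Hcq ltac:(lra)).
    apply Rabs_def2 in Hcp. apply Rabs_def2 in Hcq.
    assert (Hi : exists i, (i <= n)%nat /\ Rabs (v (f i) - lam) <= hk).
    { destruct (Rlt_dec (v (f 0%nat)) lam) as [Hl|Hl].
      { exists 0%nat. split; [lia|]. rewrite Rabs_left; lra. }
      destruct (Rlt_dec lam (v (f n))) as [Hl'|Hl'].
      { exists n. split; [lia|]. rewrite Rabs_right; lra. }
      destruct (discrete_ivt n f hk lam) as [i Hi]; [lra| |lra|exists i; auto].
      intros i Hi. destruct (Hst i Hi) as [A [B C]]. pose proof (dpos (f i) (f (S i))). split; nra. }
    destruct Hi as [i [Hi Hi']]. exists (f i), n, f, i.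
    split; [apply chain_mono with h; auto|]. split; [lra|]. split; [lra|]. auto. }
  set (mk := fun k => proj1_sig (constructive_indefinite_description _ (H k))).
  assert (Hmk : forall k, exists n f i, chain (/ INR (S k)) n f /\
     d (f 0%nat) p < / INR (S k) /\ d (f n) q < / INR (S k) /\ (i <= n)%nat /\ mk k = f i /\
     Rabs (v (mk k) - lam) <= / INR (S k)).
  { intro k. exact (proj2_sig (constructive_indefinite_description _ (H k))). }
  assert (HKm : forall k, K (mk k)).
  { intro k. destruct (Hmk k) as [n [f [i [[HK _] [_ [_ [Hi [-> _]]]]]]]]. apply HK; auto. }
  destruct (cluster_K mk HKm) as [m [Km Hcl]].
  exists m. split; [|split].
  - apply abs_small_eq. intros e He.
    destruct (cont_K m (e/2) Km ltac:(lra)) as [dl [Hdl Hcont]].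
    destruct (hN_small (e/2) ltac:(lra)) as [N HN].
    destruct (Hcl dl Hdl N) as [k [Hk Hd]].
    specialize (Hcont (mk k) (HKm k)). rewrite ds in Hcont. specialize (Hcont Hd).
    specialize (HN k Hk).
    destruct (Hmk k) as [n [f [i [_ [_ [_ [_ [_ Hv']]]]]]]].
    apply Rabs_def2 in Hcont. apply Rabs_le_between in Hv'. apply Rabs_def1; lra.
  - intros h Hh. destruct (hN_small h Hh) as [N HN].
    destruct (Hcl h Hh N) as [k [Hk Hd]]. specialize (HN k Hk).
    destruct (Hmk k) as [n [f [i [Hch [H0 [Hn [Hi [Heq _]]]]]]]].
    exists i, f. split; [|split].
    + apply chain_mono with (/ INR (S k)); [lra|]. apply chain_trunc with n; auto.
    + lra.
    + rewrite <- Heq. auto.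
  - intros h Hh. destruct (hN_small h Hh) as [N HN].
    destruct (Hcl h Hh N) as [k [Hk Hd]]. specialize (HN k Hk).
    destruct (Hmk k) as [n [f [i [Hch [H0 [Hn [Hi [Heq _]]]]]]]].
    exists (n - i)%nat, (fun j => f (i + j)%nat). split; [|split].
    + apply chain_mono with (/ INR (S k)); [lra|]. apply chain_shift; auto.
    + rewrite Nat.add_0_r, <- Heq. auto.
    + replace (i + (n - i))%nat with n by lia. lra.
Qed.

Lemma claim_h x h : Om x -> 0 < h ->
  exists q n f, K q /\ ~ Om q /\ f 0%nat = x /\ chain h n f /\ d (f n) q < h.
Proof.
  intros Hx Hh.
  set (Ich := fun n f => f 0%nat = x /\ chain h n f /\ forall i, (i <= n)%nat -> Om (f i)).
  set (E := fun r => exists n f, Ich n f /\ r = v (f n)).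
  assert (HKx : K x) by (apply closure_incl; auto).
  destruct v_bounded_below as [M HM].
  destruct (inf_exists E) as [al [Hal1 Hal2]].
  { exists (v x). exists 0%nat, (fun _ => x). split; auto. split; auto. split.
    - split. intros; auto. intros; lia.
    - intros; auto. }
  { exists M. intros r [n [f [[H0 [[HK _] _]] ->]]]. apply HM, HK. lia. }
  assert (Hk : forall k : nat, exists e, exists n f, Ich n f /\ e = f n /\ v e < al + / INR (S k)).
  { intro k. destruct (Hal2 (/ INR (S k)) (hN_pos k)) as [r [[n [f [Hi ->]]] Hlt]].
    exists (f n), n, f. auto. }
  set (ek := fun k => proj1_sig (constructive_indefinite_description _ (Hk k))).
  assert (Hek : forall k, exists n f, Ich n f /\ ek k = f n /\ v (ek k) < al + / INR (S k)).
  { intro k. exact (proj2_sig (constructive_indefinite_description _ (Hk k))). }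
  assert (HKe : forall k, K (ek k)).
  { intro k. destruct (Hek k) as [n [f [[_ [[HK _] _]] [-> _]]]]. apply HK; lia. }
  destruct (cluster_K ek HKe) as [m [Km Hcl]].
  assert (Hvm : v m <= al).
  { apply le_eps. intros e He.
    destruct (cont_K m (e/2) Km ltac:(lra)) as [dl [Hdl Hcont]].
    destruct (hN_small (e/2) ltac:(lra)) as [N HN].
    destruct (Hcl dl Hdl N) as [k [Hk' Hd]].
    specialize (Hcont (ek k) (HKe k)). rewrite ds in Hcont. specialize (Hcont Hd).
    specialize (HN k Hk'). destruct (Hek k) as [n [f [_ [_ Hlt]]]].
    apply Rabs_def2 in Hcont. lra. }
  destruct (classic (Om m)) as [Hom|Hnom].
  2:{ destruct (Hcl h Hh 0%nat) as [k [_ Hd]].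
      destruct (Hek k) as [n [f [[H0 [Hch _]] [Heq _]]]].
      exists m, n, f. split; [|split; [|split; [|split]]]; auto. rewrite <- Heq; auto. }
  set (c' := (1 + c) / 2).
  destruct (cont_K m (h/3) Km ltac:(lra)) as [dl1 [Hdl1 Hcont1]].
  set (r := Rmin (h/2) dl1).
  assert (Hr : 0 < r) by (unfold r; apply Rmin_pos; lra).
  assert (Hr1 : r <= h/2 /\ r <= dl1) by (unfold r; split; [apply Rmin_l|apply Rmin_r]).
  destruct (Hs m Hom r Hr c' ltac:(unfold c'; lra)) as [q' [Kq' [HD Hdec]]].
  set (D := d m q') in *.
  set (th2 := Rmin ((c' - c) * D / 2) (h/3)).
  assert (Hth2 : 0 < th2) by (unfold th2; apply Rmin_pos; unfold c'; nra).
  assert (Hth2' : th2 <= (c' - c) * D / 2 /\ th2 <= h/3) by (unfold th2; split; [apply Rmin_l|apply Rmin_r]).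
  destruct (cont_K m th2 Km Hth2) as [dl2 [Hdl2 Hcont2]].
  set (th1 := Rmin (Rmin ((c' - c) * D / 2) (h/2)) dl2).
  assert (Hth1 : 0 < th1) by (unfold th1; repeat apply Rmin_pos; unfold c'; nra).
  assert (Hth1' : th1 <= (c' - c) * D / 2 /\ th1 <= h/2 /\ th1 <= dl2).
  { unfold th1. repeat split. eapply Rle_trans; [apply Rmin_l|apply Rmin_l].
    eapply Rle_trans; [apply Rmin_l|apply Rmin_r]. apply Rmin_r. }
  destruct (Hcl th1 Hth1 0%nat) as [k [_ Hdk]].
  destruct (Hek k) as [n [f [[H0 [Hch Hom']] [Heq _]]]].
  specialize (Hcont2 (ek k) (HKe k)). rewrite ds in Hcont2. specialize (Hcont2 ltac:(lra)).
  specialize (Hcont1 q' Kq' ltac:(unfold D in HD; lra)).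
  apply Rabs_def2 in Hcont1. apply Rabs_def2 in Hcont2.
  pose proof (dt (ek k) m q') as T1. rewrite ds in Hdk.
  assert (Hs1 : d (ek k) q' < h) by (rewrite (ds (ek k) m) in T1; fold D in T1; lra).
  assert (Hs2 : c * d (ek k) q' <= v (ek k) - v q').
  { rewrite (ds (ek k) m) in T1. fold D in T1.
    assert (c * d (ek k) q' <= c * (th1 + D)) by (apply Rmult_le_compat_l; lra).
    unfold c' in *. nra. }
  assert (Hs3 : v (ek k) - v q' <= h) by lra.
  destruct (classic (Om q')) as [Hq'|Hq'].
  - exfalso.
    set (f' := fun i => if Nat.leb i n then f i else q').
    assert (Ich (S n) f').
    { split; [|split; [split|]].
      - unfold f'. simpl. auto.
      - intros i Hi. unfold f'. destruct (Nat.leb_spec i n). apply Hch; auto. auto.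
      - intros i Hi. unfold f'. destruct (Nat.leb_spec i n); destruct (Nat.leb_spec (S i) n).
        + apply Hch. lia.
        + assert (i = n) by lia. subst i. rewrite <- Heq. lra.
        + lia.
        + lia.
      - intros i Hi. unfold f'. destruct (Nat.leb_spec i n); auto. }
    assert (E (v q')).
    { exists (S n), f'. split; auto. unfold f'. destruct (Nat.leb_spec (S n) n); [lia|auto]. }
    specialize (Hal1 _ H1). unfold c' in Hdec. pose proof (dpos m q'). fold D in H2. nra.
  - exists q', n, f. split; [|split; [|split; [|split]]]; auto. rewrite <- Heq. lra.
Qed.

Lemma reach x : Om x -> exists q, K q /\ ~ Om q /\ Qr x q.
Proof.
  intro Hx.
  assert (H : forall k : nat, exists q, K q /\ ~ Om q /\ exists n f, f 0%nat = x /\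
      chain (/ INR (S k)) n f /\ d (f n) q < / INR (S k)).
  { intro k. destruct (claim_h x (/ INR (S k)) Hx (hN_pos k)) as [q [n [f [A [B [C [D E]]]]]]].
    exists q. split; [|split]; auto. exists n, f. auto. }
  set (qk := fun k => proj1_sig (constructive_indefinite_description _ (H k))).
  assert (Hqk : forall k, K (qk k) /\ ~ Om (qk k) /\ exists n f, f 0%nat = x /\
      chain (/ INR (S k)) n f /\ d (f n) (qk k) < / INR (S k)).
  { intro k. exact (proj2_sig (constructive_indefinite_description _ (H k))). }
  destruct (cluster_K qk (fun k => proj1 (Hqk k))) as [q [Kq Hcl]].
  exists q. split; auto. split.
  - intro Hq. destruct (HO q Hq) as [r [Hr Hb]].
    destruct (Hcl r Hr 0%nat) as [k [_ Hd]]. apply (proj1 (proj2 (Hqk k))). apply Hb.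
    rewrite ds; auto.
  - intros h Hh. destruct (hN_small (h/2) ltac:(lra)) as [N HN].
    destruct (Hcl (h/2) ltac:(lra) N) as [k [Hk Hd]]. specialize (HN k Hk).
    destruct (Hqk k) as [_ [_ [n [f [H0 [Hch Hn]]]]]].
    exists n, f. split; [|split].
    + apply chain_mono with (/ INR (S k)); auto; lra.
    + rewrite H0, dr. auto.
    + pose proof (dt (f n) (qk k) q). lra.
Qed.
Definition mid (p q : X) : X :=
  choose_or X (fun m => v m = (v p + v q) / 2 /\ Qr p m /\ Qr m q) p.

Lemma Qr_le p q : Qr p q -> v q <= v p.
Proof. intro H. pose proof (Qr_dist p q H). pose proof (dpos p q). nra. Qed.

Lemma mid_spec p q : Qr p q ->
  v (mid p q) = (v p + v q) / 2 /\ Qr p (mid p q) /\ Qr (mid p q) q.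
Proof.
  intro H. unfold mid. apply (choose_or_spec X). pose proof (Qr_le p q H).
  apply Qr_mid; auto. lra.
Qed.

Section Curve.
Variable x q : X.
Hypothesis Hx : Om x.
Hypothesis Hq : ~ Om q.
Hypothesis HQ : Qr x q.

Fixpoint G (n k : nat) : X :=
  match n with
  | O => if Nat.eqb k 0 then q else x
  | S n' => if Nat.even k then G n' (Nat.div2 k)
            else mid (G n' (S (Nat.div2 k))) (G n' (Nat.div2 k))
  end.

Lemma G_S n k : G (S n) k = if Nat.even k then G n (Nat.div2 k)
            else mid (G n (S (Nat.div2 k))) (G n (Nat.div2 k)).
Proof. reflexivity. Qed.

Lemma G_even n j : G (S n) (2 * j) = G n j.
Proof. rewrite G_S, Nat.even_mul, Nat.div2_double. reflexivity. Qed.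

Lemma G_odd n j : G (S n) (S (2 * j)) = mid (G n (S j)) (G n j).
Proof.
  rewrite G_S, Nat.even_succ, Nat.odd_mul, Nat.div2_succ_double. reflexivity.
Qed.

Let Dl := v x - v q.

Lemma G_inv n : (forall k, (k <= Nat.pow 2 n)%nat -> v (G n k) = v q + INR k * Dl / 2 ^ n) /\
                (forall k, (k < Nat.pow 2 n)%nat -> Qr (G n (S k)) (G n k)).
Proof.
  induction n as [|n [IH1 IH2]].
  - simpl. split.
    + intros k Hk. destruct k as [|[|k]]; simpl; [|unfold Dl|lia]; field.
    + intros k Hk. destruct k; [|lia]. simpl. auto.
  - split.
    + intros k Hk. simpl in Hk.
      destruct (Nat.Even_or_Odd k) as [[j ->]|[j ->]].
      * rewrite G_even, IH1 by lia. rewrite mult_INR. simpl (INR 2). simpl pow.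
        field. apply Rgt_not_eq, pow2_pos.
      * replace (2 * j + 1)%nat with (S (2 * j)) by lia. rewrite G_odd.
        destruct (mid_spec _ _ (IH2 j ltac:(lia))) as [Hv' _].
        rewrite Hv', !IH1 by lia. rewrite !S_INR, !mult_INR. simpl (INR 2). simpl pow.
        field. apply Rgt_not_eq, pow2_pos.
    + intros k Hk. simpl in Hk.
      destruct (Nat.Even_or_Odd k) as [[j ->]|[j ->]].
      * rewrite G_odd, G_even. apply mid_spec, IH2. lia.
      * replace (S (2 * j + 1)) with (2 * S j)%nat by lia.
        replace (2 * j + 1)%nat with (S (2 * j)) by lia.
        rewrite G_odd, G_even. apply mid_spec, IH2. lia.
Qed.

Lemma G_K n k : (k <= Nat.pow 2 n)%nat -> K (G n k).
Proof.
  intro Hk. destruct (G_inv n) as [_ H2].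
  assert (0 < Nat.pow 2 n)%nat by (apply Nat.neq_0_lt_0, Nat.pow_nonzero; lia).
  destruct (Nat.lt_ge_cases k (Nat.pow 2 n)).
  - apply (Qr_K _ _ (H2 k H0)).
  - replace k with (S (k - 1)) by lia. apply (Qr_K _ _ (H2 (k-1)%nat ltac:(lia))).
Qed.

Let s n := Dl / (c * 2 ^ n).

Lemma G_step n k : (k < Nat.pow 2 n)%nat -> d (G n k) (G n (S k)) <= s n.
Proof.
  intro Hk. destruct (G_inv n) as [H1 H2]. pose proof (Qr_dist _ _ (H2 k Hk)).
  rewrite H1, H1 in H by lia. rewrite S_INR in H. rewrite ds. unfold s.
  pose proof (pow2_pos n). apply Rle_div_r. nra.
  replace (v q + (INR k + 1) * Dl / 2 ^ n - (v q + INR k * Dl / 2 ^ n)) with (Dl / 2 ^ n) in H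
    by (field; lra).
  apply Rle_div_r in H; [|lra]. lra.
Qed.

Lemma G_dist n j k : (j <= k)%nat -> (k <= Nat.pow 2 n)%nat ->
  d (G n j) (G n k) <= (INR k - INR j) * s n.
Proof.
  intros Hjk Hk. induction k.
  - assert (j = 0%nat) by lia. subst. rewrite dr. lra.
  - destruct (Nat.eq_dec j (S k)) as [->|Hne].
    + rewrite dr. lra.
    + specialize (IHk ltac:(lia) ltac:(lia)). pose proof (G_step n k ltac:(lia)).
      pose proof (dt (G n j) (G n k) (G n (S k))). rewrite S_INR. lra.
Qed.

Lemma G_dist_abs n j k : (j <= Nat.pow 2 n)%nat -> (k <= Nat.pow 2 n)%nat ->
  d (G n j) (G n k) <= Rabs (INR k - INR j) * s n.
Proof.
  intros Hj Hk. destruct (Nat.le_ge_cases j k).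
  - rewrite Rabs_right. apply G_dist; auto. pose proof (le_INR _ _ H). lra.
  - rewrite ds, Rabs_left1. replace (- (INR k - INR j)) with (INR j - INR k) by ring.
    apply G_dist; auto. pose proof (le_INR _ _ H). lra.
Qed.

Lemma G_0 n : G n 0 = q.
Proof. induction n. reflexivity. rewrite <- IHn. apply (G_even n 0). Qed.

Lemma G_top n : G n (Nat.pow 2 n) = x.
Proof. induction n. reflexivity. rewrite <- IHn. rewrite <- (G_even n). f_equal. Qed.
Fixpoint kk (th : R) (n : nat) : nat :=
  match n with
  | O => O
  | S n' => if Rle_dec (INR (S (2 * kk th n')) / 2 ^ (S n')) th
            then S (2 * kk th n') else (2 * kk th n')%nat
  end.

Lemma kk_S th n : kk th (S n) = if Rle_dec (INR (S (2 * kk th n)) / 2 ^ (S n)) th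
            then S (2 * kk th n) else (2 * kk th n)%nat.
Proof. reflexivity. Qed.

Lemma kk_inv th n : 0 <= th <= 1 ->
  INR (kk th n) / 2 ^ n <= th <= INR (S (kk th n)) / 2 ^ n /\ (kk th n < Nat.pow 2 n)%nat.
Proof.
  intro Hth. induction n as [|n [[IH1 IH2] IH3]].
  - simpl. split; [split|]; [lra|lra|lia].
  - pose proof (pow2_pos n) as Hp.
    rewrite kk_S. set (k := kk th n) in *.
    assert (E : forall m : nat, INR m / 2 ^ S n = INR m / 2 / 2 ^ n) by (intro; simpl; field; lra).
    destruct (Rle_dec _ _) as [Hle|Hnle].
    + split; [split|].
      * auto.
      * rewrite E, !S_INR, mult_INR. simpl (INR 2). rewrite S_INR in IH2.
        replace ((2 * INR k + 1 + 1) / 2 / 2 ^ n) with ((INR k + 1) / 2 ^ n) by (field; lra). lra.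
      * simpl. lia.
    + split; [split|].
      * rewrite E, mult_INR. simpl (INR 2). replace (2 * INR k / 2 / 2 ^ n) with (INR k / 2 ^ n) by (field; lra). lra.
      * lra.
      * simpl. lia.
Qed.

Definition A th n := G n (kk th n).


Lemma Dl_pos : 0 < Dl.
Proof.
  pose proof (Qr_dist _ _ HQ) as Hd. unfold Dl.
  assert (Hne : x <> q) by (intro; subst; contradiction).
  assert (0 < d x q).
  { destruct (dpos x q) as [|H1]; auto. exfalso. apply Hne. apply (d_eq X d Hm). auto. }
  nra.
Qed.

Lemma s_half n : s (S n) = s n / 2.
Proof. unfold s. simpl. field. split. apply Rgt_not_eq, pow2_pos. lra. Qed.

Lemma s_pos n : 0 < s n.
Proof. unfold s. apply Rdiv_lt_0_compat. apply Dl_pos. pose proof (pow2_pos n). nra. Qed.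

Lemma s_small e : 0 < e -> exists N, forall n, (N <= n)%nat -> s n < e.
Proof.
  intro He. destruct (pow2_small (Dl / c) e) as [N HN].
  { apply Rlt_le, Rdiv_lt_0_compat. apply Dl_pos. lra. } auto.
  exists N. intros n Hn. specialize (HN n Hn). unfold s.
  replace (Dl / (c * 2 ^ n)) with (Dl / c / 2 ^ n) by (field; repeat split; try lra; apply Rgt_not_eq, pow2_pos). auto.
Qed.

Lemma A_step th n : 0 <= th <= 1 -> d (A th (S n)) (A th n) <= s (S n).
Proof.
  intro Hth. unfold A. rewrite kk_S.
  destruct (kk_inv th n Hth) as [_ Hk].
  destruct (Rle_dec _ _).
  - rewrite <- (G_even n (kk th n)). rewrite ds.
    pose proof (G_step (S n) (2 * kk th n) ltac:(simpl; lia)). unfold s. auto.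
  - rewrite G_even, dr. pose proof (s_pos (S n)). unfold s in *. lra.
Qed.

Lemma A_cauchy th n i : 0 <= th <= 1 -> d (A th (n + i)) (A th n) <= s n - s (n + i).
Proof.
  intro Hth. induction i.
  - rewrite Nat.add_0_r, dr. lra.
  - replace (n + S i)%nat with (S (n + i)) by lia.
    pose proof (A_step th (n + i) Hth). pose proof (dt (A th (S (n + i))) (A th (n + i)) (A th n)).
    rewrite s_half in *. lra.
Qed.

Lemma A_cauchy' th n m : 0 <= th <= 1 -> (n <= m)%nat -> d (A th m) (A th n) <= s n.
Proof.
  intros Hth Hnm. replace m with (n + (m - n))%nat by lia.
  pose proof (A_cauchy th n (m - n) Hth). pose proof (s_pos (n + (m - n))). lra.
Qed.

Definition Gc th : X :=
  choose_or X (fun p => forall e, 0 < e -> exists N, forall n, (N <= n)%nat -> d (A th n) p < e) x.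

Lemma Gc_lim th : 0 <= th <= 1 -> forall e, 0 < e -> exists N, forall n, (N <= n)%nat -> d (A th n) (Gc th) < e.
Proof.
  intro Hth. unfold Gc. apply (choose_or_spec X).
  destruct (cluster X d Hm Hc (A th)) as [p Hp]. exists p. intros e He.
  destruct (s_small (e/2) ltac:(lra)) as [N HN].
  exists N. intros n Hn. destruct (Hp (e/2) ltac:(lra) n) as [m [Hm' Hd]].
  pose proof (A_cauchy' th n m Hth Hm') as C1. specialize (HN n Hn).
  pose proof (dt (A th n) (A th m) p) as C2. rewrite (ds (A th n) (A th m)) in C2. lra.
Qed.

Lemma Gc_approx th n : 0 <= th <= 1 -> d (A th n) (Gc th) <= s n.
Proof.
  intro Hth. apply le_eps. intros e He.
  destruct (Gc_lim th Hth e He) as [N HN].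
  specialize (HN (Nat.max N n) ltac:(lia)).
  pose proof (A_cauchy' th n (Nat.max N n) Hth ltac:(lia)) as C1.
  pose proof (dt (A th n) (A th (Nat.max N n)) (Gc th)) as C2. rewrite (ds (A th n) (A th _)) in C2. lra.
Qed.

Lemma A_K th n : 0 <= th <= 1 -> K (A th n).
Proof. intro Hth. unfold A. apply G_K. destruct (kk_inv th n Hth). lia. Qed.

Lemma Gc_K th : 0 <= th <= 1 -> K (Gc th).
Proof.
  intro Hth. apply K_closed. intros r Hr.
  destruct (Gc_lim th Hth r Hr) as [N HN]. exists (A th N). split.
  apply A_K; auto. rewrite ds. apply HN. lia.
Qed.

Lemma Gc_lip th th' : 0 <= th <= 1 -> 0 <= th' <= 1 ->
  d (Gc th) (Gc th') <= Rabs (th - th') * (Dl / c).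
Proof.
  intros Hth Hth'. apply le_eps. intros e He.
  destruct (s_small (e/3) ltac:(lra)) as [n Hn]. specialize (Hn n (le_n n)).
  pose proof (Gc_approx th n Hth). pose proof (Gc_approx th' n Hth').
  destruct (kk_inv th n Hth) as [[B1 B2] B3]. destruct (kk_inv th' n Hth') as [[B1' B2'] B3'].
  pose proof (G_dist_abs n (kk th n) (kk th' n) ltac:(lia) ltac:(lia)) as HG.
  fold (A th n) (A th' n) in HG.
  pose proof (dt (Gc th) (A th n) (Gc th')). pose proof (dt (A th n) (A th' n) (Gc th')).
  rewrite (ds (Gc th) (A th n)) in H1.
  pose proof (pow2_pos n) as Hp.
  rewrite S_INR in B2, B2'.
  assert (Rabs (INR (kk th' n) - INR (kk th n)) <= Rabs (th - th') * 2 ^ n + 1).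
  { apply Rle_div_r in B2; [|lra]. apply Rle_div_r in B2'; [|lra].
    apply Rle_div_l in B1; [|lra]. apply Rle_div_l in B1'; [|lra].
    apply Rabs_le. split.
    - assert ((th - th') * 2 ^ n <= Rabs (th - th') * 2 ^ n) by (apply Rmult_le_compat_r; [lra|apply Rle_abs]). lra.
    - assert ((th' - th) * 2 ^ n <= Rabs (th - th') * 2 ^ n).
      { apply Rmult_le_compat_r; [lra|]. rewrite Rabs_minus_sym. apply Rle_abs. } lra. }
  assert (Hs2 : s n * 2 ^ n = Dl / c) by (unfold s; field; repeat split; try lra; apply Rgt_not_eq, pow2_pos).
  pose proof (s_pos n).
  assert (Rabs (INR (kk th' n) - INR (kk th n)) * s n <= Rabs (th - th') * (Dl / c) + s n).
  { rewrite <- Hs2. apply Rmult_le_compat_r with (r := s n) in H3; lra. }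
  lra.
Qed.

Lemma Gc_level th : 0 <= th <= 1 -> v (Gc th) = v q + th * Dl.
Proof.
  intro Hth. apply abs_small_eq. intros e He.
  destruct (cont_K (Gc th) (e/2) (Gc_K th Hth) ltac:(lra)) as [dl [Hdl Hcont]].
  destruct (s_small dl Hdl) as [N1 HN1].
  destruct (pow2_small Dl (e/2) (Rlt_le _ _ Dl_pos) ltac:(lra)) as [N2 HN2].
  set (n := Nat.max N1 N2). specialize (HN1 n ltac:(lia)). specialize (HN2 n ltac:(lia)).
  pose proof (Gc_approx th n Hth). rewrite ds in H.
  specialize (Hcont (A th n) (A_K th n Hth) ltac:(lra)).
  destruct (G_inv n) as [H1 _]. destruct (kk_inv th n Hth) as [[B1 B2] B3].
  unfold A in Hcont. rewrite H1 in Hcont by lia.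
  pose proof (pow2_pos n) as Hp. pose proof Dl_pos.
  rewrite S_INR in B2.
  assert (INR (kk th n) * Dl / 2 ^ n <= th * Dl).
  { apply Rle_div_l in B1; [|lra]. unfold Rdiv. rewrite Rmult_assoc, (Rmult_comm Dl), <- Rmult_assoc. 
    apply Rmult_le_compat_r; [lra|]. apply Rle_div_l; [lra|]. unfold Rdiv. rewrite Rmult_comm. lra. }
  assert (th * Dl <= INR (kk th n) * Dl / 2 ^ n + Dl / 2 ^ n).
  { replace (INR (kk th n) * Dl / 2 ^ n + Dl / 2 ^ n) with ((INR (kk th n) + 1) / 2 ^ n * Dl) by (field; lra).
    apply Rmult_le_compat_r; lra. }
  apply Rabs_def2 in Hcont. apply Rabs_def1; lra.
Qed.

Lemma Gc_0 : Gc 0 = q.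
Proof.
  symmetry. apply (d_eq X d Hm). apply Rle_antisym; [|apply dpos].
  apply le_eps. intros e He. destruct (s_small e He) as [n Hn]. specialize (Hn n (le_n n)).
  pose proof (Gc_approx 0 n ltac:(lra)).
  destruct (kk_inv 0 n ltac:(lra)) as [[B1 _] _].
  pose proof (pow2_pos n). apply Rle_div_l in B1; [|lra]. rewrite Rmult_0_l in B1.
  pose proof (pos_INR (kk 0 n)). assert (kk 0 n = 0%nat) by (apply INR_eq; simpl; lra).
  unfold A in H. rewrite H2, G_0 in H. lra.
Qed.

Lemma Gc_1 : Gc 1 = x.
Proof.
  symmetry. apply (d_eq X d Hm). apply Rle_antisym; [|apply dpos].
  apply le_eps. intros e He. destruct (s_small (e/2) ltac:(lra)) as [n Hn]. specialize (Hn n (le_n n)).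
  pose proof (Gc_approx 1 n ltac:(lra)).
  destruct (kk_inv 1 n ltac:(lra)) as [[_ B2] B3].
  pose proof (pow2_pos n). apply Rle_div_r in B2; [|lra]. rewrite Rmult_1_l, S_INR in B2.
  pose proof (G_dist n (kk 1 n) (Nat.pow 2 n) ltac:(lia) (le_n _)).
  rewrite G_top, pow_INR in H1. replace (INR 2) with 2 in H1 by (simpl; lra).
  fold (A 1 n) in H1. rewrite ds in H1.
  pose proof (s_pos n).
  pose proof (dt x (A 1 n) (Gc 1)).
  assert ((2 ^ n - INR (kk 1 n)) * s n <= s n) by (rewrite <- (Rmult_1_l (s n)) at 2; apply Rmult_le_compat_r; lra).
  lra.
Qed.

Let T := Dl / c.

Lemma T_pos : 0 < T.
Proof. unfold T. apply Rdiv_lt_0_compat. apply Dl_pos. lra. Qed.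

Definition Gt t := Gc (t / T).

Lemma th_range t : 0 <= t <= T -> 0 <= t / T <= 1.
Proof.
  intro Ht. pose proof T_pos. split.
  - apply Rdiv_le_0_compat; lra.
  - apply Rle_div_l; lra.
Qed.

Lemma Gt_lip t t' : 0 <= t <= T -> 0 <= t' <= T -> d (Gt t) (Gt t') <= Rabs (t - t').
Proof.
  intros Ht Ht'. unfold Gt. pose proof (Gc_lip _ _ (th_range t Ht) (th_range t' Ht')).
  pose proof T_pos. fold T in H.
  replace (t / T - t' / T) with ((t - t') / T) in H by (field; lra).
  rewrite Rabs_div in H by lra. rewrite (Rabs_right T) in H by lra.
  replace (Rabs (t - t') / T * T) with (Rabs (t - t')) in H by (field; lra). auto.
Qed.

Lemma Gt_level t : 0 <= t <= T -> v (Gt t) = v q + c * t.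
Proof.
  intro Ht. unfold Gt. rewrite Gc_level by (apply th_range; auto).
  unfold T. field. split. lra. pose proof Dl_pos. lra.
Qed.

Lemma Gt_K t : 0 <= t <= T -> K (Gt t).
Proof. intro Ht. apply Gc_K, th_range; auto. Qed.

Lemma Gt_0 : Gt 0 = q.
Proof. unfold Gt. replace (0 / T) with 0 by (unfold Rdiv; ring). apply Gc_0. Qed.

Lemma Gt_T : Gt T = x.
Proof. unfold Gt. replace (T / T) with 1 by (pose proof T_pos; field; lra). apply Gc_1. Qed.

Lemma curve_exists : exists b T' be, boundary X d Om b /\ admissible_curve X d Om b x T' be /\
  (c * T' = v x - v b)%R.
Proof.
  pose proof T_pos as HT.
  set (S0 := fun s => 0 <= s <= T /\ ~ Om (Gt s)).
  destruct (sup_exists S0) as [sg [Hs1 Hs2]].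
  { exists 0. split. lra. rewrite Gt_0. auto. }
  { exists T. intros r [Hr _]. lra. }
  assert (Hsg0 : 0 <= sg) by (apply Hs1; split; [lra|rewrite Gt_0; auto]).
  assert (HsgT : sg <= T).
  { apply Rnot_lt_le. intro Hlt. destruct (Hs2 (sg - T) ltac:(lra)) as [r [[Hr _] Hr']]. lra. }
  assert (Hnot : ~ Om (Gt sg)).
  { intro Hin. destruct (HO _ Hin) as [rho [Hrho Hb]].
    destruct (Hs2 rho Hrho) as [s0 [[Hs0 Hns0] Hlt]].
    assert (s0 <= sg) by (apply Hs1; split; auto).
    apply Hns0, Hb. rewrite ds. eapply Rle_lt_trans. apply Gt_lip; lra.
    rewrite Rabs_left1; lra. }
  assert (HsgT' : sg < T).
  { destruct HsgT as [|Heq]; auto. exfalso. apply Hnot. rewrite Heq, Gt_T. auto. }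
  assert (Hin : forall t, sg < t <= T -> Om (Gt t)).
  { intros t Ht. apply NNPP. intro Hn. assert (t <= sg) by (apply Hs1; split; [lra|auto]). lra. }
  exists (Gt sg), (T - sg), (fun t => Gt (sg + t)). split; [|split].
  - apply (boundary_iff X d Hm); auto. split; auto. apply Gt_K; lra.
  - split; [lra|split; [|split; [|split; [|split]]]].
    + intros s0 t0 Hs0 Ht0. replace (s0 - t0) with ((sg + s0) - (sg + t0)) by ring.
      apply Gt_lip; lra.
    + intros t0 Ht0. apply Gt_K; lra.
    + rewrite Rplus_0_r. auto.
    + replace (sg + (T - sg)) with T by ring. apply Gt_T.
    + intros t0 Ht0. apply Hin. lra.
  - rewrite Gt_level by lra. rewrite <- Gt_T at 1. rewrite Gt_level by lra. ring.
Qed.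

End Curve.

Lemma descent x : Om x -> exists b T' be, boundary X d Om b /\ admissible_curve X d Om b x T' be /\
  (c * T' = v x - v b)%R.
Proof.
  intro Hx. destruct (reach x Hx) as [q [Kq [Hq HQ]]]. apply (curve_exists x q Hx Hq HQ).
Qed.
End Descent.


Section Curves.
Variable X : Type.
Variable d : X -> X -> R.
Hypothesis Hm : is_metric X d.
Let ds := d_sym X d Hm.
Let dr := d_refl X d Hm.
Let dt := d_tri X d Hm.
Let dpos := d_pos X d Hm.

Lemma adm_const Om y : closure X d Om y -> admissible_curve X d Om y y 0 (fun _ => y).
Proof.
  intro Hy. split; [lra|split; [|split; [|split; [|split]]]]; auto.
  - intros. rewrite dr. apply Rabs_pos.
  - intros t Ht. lra.
Qed.

Lemma adm_len Om y x T g : admissible_curve X d Om y x T g -> d y x <= T.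
Proof.
  intros [HT [Hl [_ [H0 [H1 _]]]]]. rewrite <- H0, <- H1.
  eapply Rle_trans. apply Hl; lra. rewrite Rabs_left1; lra.
Qed.

Lemma adm_restr Om y x T g s : admissible_curve X d Om y x T g -> 0 <= s <= T ->
  admissible_curve X d Om y (g s) s g.
Proof.
  intros [HT [Hl [Hc [H0 [H1 Hi]]]]] Hs. split; [lra|split; [|split; [|split; [|split]]]]; auto.
  - intros. apply Hl; lra.
  - intros. apply Hc; lra.
  - intros. apply Hi; lra.
Qed.

Lemma adm_shift Om y x T g s : admissible_curve X d Om y x T g -> 0 <= s <= T ->
  admissible_curve X d Om (g s) x (T - s) (fun t => g (s + t)).
Proof.
  intros [HT [Hl [Hc [H0 [H1 Hi]]]]] Hs. split; [lra|split; [|split; [|split; [|split]]]].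
  - intros s0 t0 Hs0 Ht0. replace (s0 - t0) with ((s + s0) - (s + t0)) by ring. apply Hl; lra.
  - intros. apply Hc; lra.
  - rewrite Rplus_0_r. auto.
  - replace (s + (T - s)) with T by ring. auto.
  - intros. apply Hi; lra.
Qed.

Lemma adm_rev Om y x T g : admissible_curve X d Om y x T g ->
  admissible_curve X d Om x y T (fun t => g (T - t)).
Proof.
  intros [HT [Hl [Hc [H0 [H1 Hi]]]]]. split; [lra|split; [|split; [|split; [|split]]]].
  - intros s0 t0 Hs0 Ht0. replace (s0 - t0) with ((T - t0) - (T - s0)) by ring.
    rewrite Rabs_minus_sym. apply Hl; lra.
  - intros. apply Hc; lra.
  - rewrite Rminus_0_r. auto.
  - replace (T - T) with 0 by ring. auto.
  - intros. apply Hi; lra.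
Qed.

Definition concat (T1 : R) (g1 g2 : R -> X) : R -> X :=
  fun t => if Rle_dec t T1 then g1 t else g2 (t - T1).

Lemma adm_concat Om y b x T1 T2 g1 g2 :
  admissible_curve X d Om y b T1 g1 -> admissible_curve X d Om b x T2 g2 -> Om b ->
  admissible_curve X d Om y x (T1 + T2) (concat T1 g1 g2).
Proof.
  intros [HT1 [Hl1 [Hc1 [H01 [H11 Hi1]]]]] [HT2 [Hl2 [Hc2 [H02 [H12 Hi2]]]]] Hb.
  unfold concat. split; [lra|split; [|split; [|split; [|split]]]].
  - assert (mixed : forall s t, 0 <= s <= T1 -> T1 < t <= T1 + T2 ->
             d (g1 s) (g2 (t - T1)) <= Rabs (s - t)).
    { intros s t Hs Ht. pose proof (dt (g1 s) b (g2 (t - T1))) as E0.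
      assert (A1 : d (g1 s) b <= T1 - s).
      { rewrite <- H11. eapply Rle_trans. apply Hl1; lra. rewrite Rabs_left1; lra. }
      assert (A2 : d b (g2 (t - T1)) <= t - T1).
      { rewrite <- H02. eapply Rle_trans. apply Hl2; lra. rewrite Rabs_left1; lra. }
      rewrite Rabs_left1 by lra. lra. }
    intros s t Hs Ht. destruct (Rle_dec s T1); destruct (Rle_dec t T1).
    + apply Hl1; lra.
    + apply mixed; lra.
    + rewrite ds, Rabs_minus_sym. apply mixed; lra.
    + replace (s - t) with ((s - T1) - (t - T1)) by ring. apply Hl2; lra.
  - intros t Ht. destruct (Rle_dec t T1). apply Hc1; lra. apply Hc2; lra.
  - destruct (Rle_dec 0 T1). auto. lra.
  - destruct (Rle_dec (T1 + T2) T1).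
    + assert (T2 = 0) by lra. subst T2. replace (T1 + 0) with T1 by ring. rewrite H11, <- H02. auto.
    + replace (T1 + T2 - T1) with T2 by ring. auto.
  - intros t Ht. destruct (Rle_dec t T1).
    + destruct (Req_dec t T1) as [->|]. rewrite H11. auto. apply Hi1; lra.
    + apply Hi2; lra.
Qed.

Lemma lip_along Om v b z T be :
  continuous_on X d (closure X d Om) v ->
  (forall p, Om p -> forall c, 1 < c -> exists r, 0 < r /\ forall q, closure X d Om q ->
      0 < d p q < r -> v p - v q <= c * d p q) ->
  admissible_curve X d Om b z T be -> Om z -> v z - v b <= T.
Proof.
  intros Hv Hle Hadm Hz. pose proof Hadm as [HT [Hl [Hc [H0 [H1 Hi]]]]].
  set (f := fun t => v (be t)).
  assert (fcont : forall t, 0 <= t <= T -> forall e, 0 < e -> exists dl, 0 < dl /\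
            forall s, 0 <= s <= T -> Rabs (s - t) < dl -> Rabs (f t - f s) < e).
  { intros t Ht e He. destruct (Hv (be t) (Hc t Ht) e He) as [dl [Hdl Hd]].
    exists dl. split; auto. intros s Hs Hst. apply Hd. apply Hc; auto.
    eapply Rle_lt_trans. apply Hl; auto. rewrite Rabs_minus_sym; auto. }
  assert (key : forall c', 1 < c' -> forall e, 0 < e -> f T - f 0 <= c' * T + e).
  { intros c' Hc' e He.
    set (g := fun t => f t - c' * t).
    set (S := fun t => 0 <= t <= T /\ g t > g 0 + e).
    destruct (classic (exists t, S t)) as [Hne|Hemp].
    2:{ apply Rnot_lt_le. intro Hlt. apply Hemp. exists T. split. lra. unfold g. lra. }
    destruct (inf_exists S Hne) as [tau [Ht1 Ht2]].
    { exists 0. intros r [Hr _]. lra. }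
    destruct Hne as [t0 Ht0].
    assert (Htau0 : 0 <= tau) by (apply Rnot_lt_le; intro; destruct (Ht2 (- tau)) as [r [[Hr _] Hr']]; lra).
    assert (HtauT : tau <= T) by (pose proof (Ht1 t0 Ht0); destruct Ht0; lra).
    assert (Hgtau : g tau >= g 0 + e).
    { apply Rnot_lt_ge. intro Hlt.
      destruct (fcont tau ltac:(lra) (g 0 + e - g tau) ltac:(lra)) as [dl [Hdl Hd]].
      destruct (Ht2 dl Hdl) as [s [[Hs Hgs] Hs']].
      pose proof (Ht1 s (conj Hs Hgs)).
      specialize (Hd s Hs ltac:(rewrite Rabs_right; lra)).
      apply Rabs_def2 in Hd. unfold g in *. nra. }
    assert (Htaupos : 0 < tau).
    { destruct Htau0 as [|Heq]; auto. rewrite <- Heq in Hgtau. lra. }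
    assert (Hom : Om (be tau)).
    { destruct (Req_dec tau T) as [->|]. rewrite H1. auto. apply Hi. lra. }
    destruct (Hle (be tau) Hom ((1 + c') / 2) ltac:(lra)) as [r [Hr Hr']].
    set (s := Rmax 0 (tau - r / 2)).
    assert (Hs : 0 <= s < tau /\ tau - s < r).
    { unfold s, Rmax. destruct (Rle_dec 0 (tau - r / 2)); lra. }
    assert (Hgs : g s <= g 0 + e).
    { apply Rnot_lt_le. intro Hlt. assert (tau <= s) by (apply Ht1; split; lra). lra. }
    assert (Hfs : f tau - f s <= (1 + c') / 2 * (tau - s)).
    { pose proof (Hl tau s ltac:(lra) ltac:(lra)) as Hd. rewrite Rabs_right in Hd by lra.
      destruct (dpos (be tau) (be s)) as [Hdp|Hd0].
      - specialize (Hr' (be s) (Hc s ltac:(lra)) ltac:(lra)). unfold f. nra.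
      - symmetry in Hd0. apply (d_eq X d Hm) in Hd0. unfold f. rewrite Hd0. nra. }
    unfold g in *. nra. }
  apply le_eps. intros e He.
  set (c' := 1 + e / (2 * (T + 1))).
  assert (Hc' : 1 < c') by (unfold c'; assert (0 < e / (2 * (T + 1))) by (apply Rdiv_lt_0_compat; lra); lra).
  specialize (key c' Hc' (e/2) ltac:(lra)).
  unfold f in key. rewrite H0, H1 in key.
  assert (c' * T <= T + e / 2).
  { unfold c'. rewrite Rmult_plus_distr_r, Rmult_1_l.
    assert (e / (2 * (T + 1)) * T <= e / 2).
    { unfold Rdiv. rewrite Rinv_mult. 
      assert (/ (T + 1) * T <= 1). { rewrite Rmult_comm. apply (proj2 (Rle_div_l T 1 (T+1) ltac:(lra))). lra. }
      replace (e * (/ 2 * / (T + 1)) * T) with (e / 2 * (/ (T + 1) * T)) by (field; lra). nra. }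
    lra. }
  lra.
Qed.
Lemma adm_mono Om Om' y x T g : (forall z, closure X d Om' z -> closure X d Om z) ->
  (forall z, Om' z -> Om z) ->
  admissible_curve X d Om' y x T g -> admissible_curve X d Om y x T g.
Proof.
  intros H1 H2 [HT [Hl [Hc [H0 [H3 Hi]]]]]. split; [lra|split; [|split; [|split; [|split]]]]; auto.
Qed.

Lemma last_exit Om T be : is_open X d Om -> 0 <= T ->
  (forall s t, 0 <= s <= T -> 0 <= t <= T -> d (be s) (be t) <= Rabs (s - t)) ->
  ~ Om (be 0) -> Om (be T) ->
  exists sg, 0 <= sg < T /\ boundary X d Om (be sg) /\
    admissible_curve X d Om (be sg) (be T) (T - sg) (fun t => be (sg + t)).
Proof.
  intros HO HT Hl H0 HTin.
  set (S0 := fun s => 0 <= s <= T /\ ~ Om (be s)).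
  destruct (sup_exists S0) as [sg [Hs1 Hs2]].
  { exists 0. split; auto. lra. }
  { exists T. intros r [Hr _]. lra. }
  assert (Hsg0 : 0 <= sg) by (apply Hs1; split; [lra|auto]).
  assert (HsgT : sg <= T).
  { apply Rnot_lt_le. intro Hlt. destruct (Hs2 (sg - T) ltac:(lra)) as [r [[Hr _] Hr']]. lra. }
  assert (Hnot : ~ Om (be sg)).
  { intro Hin. destruct (HO _ Hin) as [rho [Hrho Hb]].
    destruct (Hs2 rho Hrho) as [s0 [[Hs0 Hns0] Hlt]].
    assert (s0 <= sg) by (apply Hs1; split; auto).
    apply Hns0, Hb. rewrite ds. eapply Rle_lt_trans. apply Hl; lra.
    rewrite Rabs_left1; lra. }
  assert (HsgT' : sg < T).
  { destruct HsgT as [|Heq]; auto. exfalso. apply Hnot. rewrite Heq. auto. }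
  assert (Hin : forall t, sg < t <= T -> Om (be t)).
  { intros t Ht. apply NNPP. intro Hn. assert (t <= sg) by (apply Hs1; split; [lra|auto]). lra. }
  assert (Hcl : closure X d Om (be sg)).
  { intros r Hr. set (t := sg + Rmin r (T - sg) / 2).
    assert (Ht : sg < t <= T /\ t - sg < r).
    { unfold t. pose proof (Rmin_l r (T - sg)). pose proof (Rmin_r r (T - sg)).
      assert (0 < Rmin r (T - sg)) by (apply Rmin_pos; lra). lra. }
    exists (be t). split. apply Hin; lra. eapply Rle_lt_trans. apply Hl; lra.
    rewrite Rabs_left1; lra. }
  exists sg. split; [lra|split].
  - apply (boundary_iff X d Hm); auto.
  - split; [lra|split; [|split; [|split; [|split]]]].
    + intros s0 t0 Hs0 Ht0. replace (s0 - t0) with ((sg + s0) - (sg + t0)) by ring.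
      apply Hl; lra.
    + intros t0 Ht0. destruct (Req_dec t0 0) as [->|]. rewrite Rplus_0_r; auto.
      apply closure_incl. auto. apply Hin; lra.
    + rewrite Rplus_0_r. auto.
    + replace (sg + (T - sg)) with T by ring. auto.
    + intros t0 Ht0. apply Hin. lra.
Qed.

Lemma RInt_one T : RInt (fun _ => 1) 0 T = T.
Proof. rewrite RInt_const. unfold scal; simpl. unfold mult; simpl. ring. Qed.

Lemma glb_props (E : R -> Prop) :
  (exists r, E r) -> (exists M, forall r, E r -> M <= r) ->
  (forall r, E r -> real (Glb_Rbar E) <= r) /\
  (forall e, 0 < e -> exists r, E r /\ r < real (Glb_Rbar E) + e).
Proof.
  intros [r0 Hr0] [M HM].
  destruct (Glb_Rbar_correct E) as [Hlb Hg].
  assert (H1 : Rbar_le (Glb_Rbar E) r0) by (apply Hlb; auto).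
  assert (H2 : Rbar_le M (Glb_Rbar E)) by (apply Hg; intros r Hr; simpl; apply HM; auto).
  destruct (Glb_Rbar E) as [a| |] eqn:Ha; simpl in H1, H2; try contradiction.
  simpl. split.
  - intros r Hr. specialize (Hlb r Hr). simpl in Hlb. auto.
  - intros e He. apply NNPP. intro Hn.
    assert (Rbar_le (a + e) a).
    { apply Hg. intros r Hr. simpl. apply Rnot_lt_le. intro. apply Hn. exists r; auto. }
    simpl in H. lra.
Qed.
End Curves.

Section E10.
Variable X : Type.
Variable d : X -> X -> R.
Hypothesis Hm : is_metric X d.
Hypothesis Hc : compact_space X d.

Lemma E10_descent Om w : is_open X d Om -> continuous_on X d (closure X d Om) w ->
  (forall x, Om x -> local_slope X d Om w x = Finite 1) ->
  forall c, 0 < c < 1 -> forall x, Om x ->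
  exists b T be, boundary X d Om b /\ admissible_curve X d Om b x T be /\ (c * T = w x - w b)%R.
Proof.
  intros HO Hw Hsl c Hc01 x Hx.
  apply (descent X d Hm Hc Om w c HO Hw); auto.
  intros p Hp r Hr c' Hc'. apply slope_ge; auto.
Qed.

Lemma E10_lip Om w b z T be : continuous_on X d (closure X d Om) w ->
  (forall x, Om x -> local_slope X d Om w x = Finite 1) ->
  admissible_curve X d Om b z T be -> Om z -> w z - w b <= T.
Proof.
  intros Hw Hsl Hadm Hz. apply (lip_along X d Hm Om w b z T be Hw); auto.
  intros p Hp c Hc1. apply slope_le; auto.
Qed.
End E10.


Section Main.
Variable X : Type.
Variable d : X -> X -> R.
Hypothesis Hm : is_metric X d.
Hypothesis Hc : compact_space X d.
Hypothesis HE : E10_property X d.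
Variable Om : X -> Prop.
Hypothesis HOm : nonempty_proper_open X d Om.
Variable g : X -> R.
Hypothesis Hgb : bounded_on X (boundary X d Om) g.
Hypothesis Hgc : continuous_on X d (boundary X d Om) g.
Hypothesis HCC : CC X d Om (fun _ => 1) g.

Let ds := d_sym X d Hm.
Let dr := d_refl X d Hm.
Let dt := d_tri X d Hm.
Let dpos := d_pos X d Hm.
Let K := closure X d Om.
Let HO : is_open X d Om := proj1 HOm.

Definition Uset x r := exists y T be, boundary X d Om y /\ admissible_curve X d Om y x T be /\ r = g y + T.
Definition u x := real (Glb_Rbar (Uset x)).

Lemma bnd_iff x : boundary X d Om x <-> K x /\ ~ Om x.
Proof. apply boundary_iff; auto. Qed.

Lemma Om_K x : Om x -> K x.
Proof. apply closure_incl; auto. Qed.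

Lemma CC_use x y T be : boundary X d Om x -> boundary X d Om y ->
  admissible_curve X d Om y x T be -> g x - g y <= T.
Proof.
  intros Hx Hy Hadm. specialize (HCC x y Hx Hy).
  set (E := fun v : Rbar => exists T gamma, admissible_curve X d Om y x T gamma /\
         v = Finite (RInt (fun t => (fun _ : X => 1) (gamma t)) 0 T)).
  assert (Hlb : Rbar_le (Rbar_glb E) (Finite T)).
  { destruct (proj2_sig (Rbar_ex_glb E)) as [H _]. apply H. exists T, be. split; auto.
    simpl. rewrite RInt_one. auto. }
  pose proof (Rbar_le_trans _ _ _ HCC Hlb). simpl in H. auto.
Qed.

Lemma Uset_lb x r : Uset x r -> exists M, forall r, Uset x r -> M <= r.
Proof.
  intros _. destruct Hgb as [M HM]. exists (- M). intros r1 [y [T [be [Hy [Hadm ->]]]]].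
  specialize (HM y Hy). destruct Hadm as [HT _]. apply Rabs_le_between in HM. lra.
Qed.

Lemma u_le x r : Uset x r -> u x <= r.
Proof.
  intro H. unfold u. apply (glb_props (Uset x)); auto. exists r; auto. eapply Uset_lb; eauto.
Qed.

Lemma u_approx x r0 : Uset x r0 -> forall e, 0 < e -> exists r, Uset x r /\ r < u x + e.
Proof.
  intros H. unfold u. apply (glb_props (Uset x)); auto. exists r0; auto. eapply Uset_lb; eauto.
Qed.

Lemma Uset_bnd x : boundary X d Om x -> Uset x (g x).
Proof.
  intro Hx. exists x, 0, (fun _ => x). split; auto. split. apply adm_const; auto. apply Hx. ring.
Qed.

Lemma u_bnd x : boundary X d Om x -> u x = g x.
Proof.
  intro Hx. apply Rle_antisym. apply u_le, Uset_bnd; auto.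
  apply le_eps. intros e He. destruct (u_approx x (g x) (Uset_bnd x Hx) e He) as [r [[y [T [be [Hy [Hadm ->]]]]] Hr]].
  pose proof (CC_use x y T be Hx Hy Hadm). lra.
Qed.

Lemma Uset_ne x : K x -> exists r, Uset x r.
Proof.
  intro Kx. destruct (classic (Om x)) as [Hx|Hx].
  - destruct (HE Om HOm) as [w [Hw [Hsl Hw0]]].
    destruct (E10_descent X d Hm Hc Om w HO Hw Hsl (1/2) ltac:(lra) x Hx) as [b [T [be [Hb [Hadm _]]]]].
    exists (g b + T), b, T, be. auto.
  - exists (g x). apply Uset_bnd. apply bnd_iff. auto.
Qed.

Lemma u_concat b z T be : K b -> admissible_curve X d Om b z T be -> u z <= u b + T.
Proof.
  intros Kb Hadm. destruct (classic (Om b)) as [Hb|Hb].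
  - destruct (Uset_ne b Kb) as [r0 Hr0].
    apply le_eps. intros e He. destruct (u_approx b r0 Hr0 e He) as [r [[y [T1 [g1 [Hy [H1 ->]]]]] Hr]].
    assert (Uset z (g y + T1 + T)).
    { exists y, (T1 + T), (concat X T1 g1 be). split; auto. split. eapply adm_concat; eauto. ring. }
    pose proof (u_le _ _ H). lra.
  - assert (Hbb : boundary X d Om b) by (apply bnd_iff; auto).
    rewrite (u_bnd b Hbb). apply u_le. exists b, T, be. split; [auto|split; [auto|reflexivity]].
Qed.

Lemma two_points : exists a a' : X, a <> a'.
Proof.
  pose proof HOm as [_ [[a Ha] [a0 Ha0]]]. exists a, a0. intro Heq. rewrite Heq in Ha. contradiction.
Qed.

Lemma short_curves x e : 0 < e -> exists dl, 0 < dl /\ forall z, z <> x -> d x z < dl ->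
  exists T be, admissible_curve X d (fun y => y <> x) x z T be /\ T < e.
Proof.
  intro He. set (Om2 := fun y : X => y <> x).
  assert (HO2 : nonempty_proper_open X d Om2).
  { split; [|split].
    - intros y Hy. exists (d x y). split.
      + destruct (dpos x y) as [|H]; auto. exfalso. apply Hy. symmetry. apply (d_eq X d Hm). auto.
      + intros z Hz Hzx. subst z. rewrite ds in Hz. lra.
    - destruct two_points as [a [a' Ha]]. destruct (classic (a = x)) as [->|Hax].
      exists a'. unfold Om2. auto. exists a. auto.
    - exists x. unfold Om2. auto. }
  destruct (HE Om2 HO2) as [w [Hw [Hsl Hw0]]].
  destruct (classic (closure X d Om2 x)) as [Hxc|Hxc].
  - assert (Hbx : boundary X d Om2 x) by (apply (boundary_iff X d Hm); [apply HO2|split; auto]).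
    destruct (Hw x Hxc (e/2) ltac:(lra)) as [dl [Hdl Hcont]].
    exists dl. split; auto. intros z Hz Hd.
    destruct (E10_descent X d Hm Hc Om2 w (proj1 HO2) Hw Hsl (1/2) ltac:(lra) z Hz) as [b [T [be [Hb [Hadm HT]]]]].
    assert (b = x) by (apply NNPP; intro; apply (proj1 ((boundary_iff X d Hm Om2 b (proj1 HO2))) Hb); auto).
    subst b. exists T, be. split; auto.
    specialize (Hcont z (closure_incl X d Hm _ _ Hz) Hd). rewrite (Hw0 x Hbx) in Hcont, HT.
    apply Rabs_def2 in Hcont. lra.
  - assert (exists r, 0 < r /\ forall z, z <> x -> d x z >= r).
    { apply NNPP. intro Hn. apply Hxc. intros r Hr. apply NNPP. intro Hn'. apply Hn. exists r. split; auto.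
      intros z Hz. apply Rnot_lt_ge. intro. apply Hn'. exists z. auto. }
    destruct H as [r [Hr Hr']]. exists r. split; auto. intros z Hz Hd. specialize (Hr' z Hz). lra.
Qed.

Lemma adm_ball x rho z T be : (forall y, d x y < rho -> Om y) ->
  admissible_curve X d (fun y => y <> x) x z T be -> T < rho ->
  admissible_curve X d Om x z T be.
Proof.
  intros Hb [HT [Hl [Hc' [H0 [H1 Hi]]]]] HTr.
  assert (Hin : forall t, 0 <= t <= T -> Om (be t)).
  { intros t Ht. apply Hb. rewrite <- H0. eapply Rle_lt_trans. apply Hl; lra. rewrite Rabs_left1; lra. }
  split; [lra|split; [|split; [|split; [|split]]]]; auto.
  - intros t Ht. apply Om_K, Hin; auto.
  - intros t Ht. apply Hin; lra.
Qed.

Lemma u_cont_int x : Om x -> forall e, 0 < e -> exists dl, 0 < dl /\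
  forall z, K z -> d x z < dl -> Rabs (u x - u z) < e.
Proof.
  intros Hx e He. destruct (HO x Hx) as [rho [Hrho Hb]].
  destruct (short_curves x (Rmin e rho) ltac:(apply Rmin_pos; lra)) as [dl [Hdl Hsc]].
  exists (Rmin dl rho). split. apply Rmin_pos; lra.
  intros z Kz Hd. pose proof (Rmin_l dl rho). pose proof (Rmin_r dl rho).
  pose proof (Rmin_l e rho). pose proof (Rmin_r e rho).
  destruct (classic (z = x)) as [->|Hzx]. rewrite Rminus_diag, Rabs_R0. auto.
  destruct (Hsc z Hzx ltac:(lra)) as [T [be [Hadm HT]]].
  assert (Hadm' := adm_ball x rho z T be Hb Hadm ltac:(lra)).
  pose proof (u_concat x z T be (Om_K x Hx) Hadm').
  pose proof (u_concat z x T _ Kz (adm_rev X d _ _ _ _ _ Hadm')).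
  apply Rabs_def1; lra.
Qed.
Lemma u_cont_bnd x : boundary X d Om x -> forall e, 0 < e -> exists dl, 0 < dl /\
  forall z, K z -> d x z < dl -> Rabs (u x - u z) < e.
Proof.
  intros Hx e He. destruct (Hgc x Hx (e/3) ltac:(lra)) as [dg [Hdg Hg]].
  destruct (short_curves x (Rmin (e/3) dg) ltac:(apply Rmin_pos; lra)) as [dl [Hdl Hsc]].
  exists (Rmin dl dg). split. apply Rmin_pos; lra.
  intros z Kz Hd. pose proof (Rmin_l dl dg) as M1. pose proof (Rmin_r dl dg) as M2.
  pose proof (Rmin_l (e/3) dg) as M3. pose proof (Rmin_r (e/3) dg) as M4.
  pose proof Hx as Hx'. apply bnd_iff in Hx' as [Kx Hnx].
  rewrite (u_bnd x Hx).
  destruct (classic (Om z)) as [Hz|Hz].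
  2:{ assert (Hbz : boundary X d Om z) by (apply bnd_iff; auto). rewrite (u_bnd z Hbz).
      specialize (Hg z Hbz ltac:(lra)). lra. }
  assert (Hzx : z <> x) by (intro; subst; contradiction).
  destruct (Hsc z Hzx ltac:(lra)) as [T [be [Hadm HT]]].
  pose proof Hadm as [HT0 [Hl [_ [E0 [E1 _]]]]].
  destruct (last_exit X d Hm Om T be HO HT0 Hl ltac:(rewrite E0; auto) ltac:(rewrite E1; auto))
    as [sg [Hsg [Hby Hadm2]]].
  rewrite E1 in Hadm2. set (y := be sg) in *.
  assert (Hdy : d x y <= sg).
  { rewrite <- E0. unfold y. eapply Rle_trans. apply Hl; lra. rewrite Rabs_left1; lra. }
  specialize (Hg y Hby ltac:(lra)).
  assert (Ky : K y) by (apply (proj1 (bnd_iff y) Hby)).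
  pose proof (u_concat y z (T - sg) _ Ky Hadm2) as Hup. rewrite (u_bnd y Hby) in Hup.
  assert (Hlow : g y - (T - sg) <= u z).
  { destruct (Uset_ne z Kz) as [r0 Hr0]. apply le_eps. intros e' He'.
    destruct (u_approx z r0 Hr0 e' He') as [r [[y' [T1 [g1 [Hy' [Had1 ->]]]]] Hr]].
    pose proof (adm_concat X d Hm Om y' z y T1 (T - sg) g1 _ Had1 (adm_rev X d _ _ _ _ _ Hadm2) Hz) as Hcat.
    pose proof (CC_use y y' _ _ Hby Hy' Hcat). lra. }
  apply Rabs_def2 in Hg. apply Rabs_def1; lra.
Qed.

Lemma u_slope_ge x : Om x -> forall r, 0 < r -> forall c, 0 < c < 1 ->
  exists z, K z /\ 0 < d x z < r /\ c * d x z < u x - u z.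
Proof.
  intros Hx r Hr c Hc01. destruct (HO x Hx) as [rho [Hrho Hb]].
  set (eta := Rmin r rho / 2).
  assert (Heta : 0 < eta /\ eta < r /\ eta < rho).
  { unfold eta. pose proof (Rmin_l r rho). pose proof (Rmin_r r rho).
    assert (0 < Rmin r rho) by (apply Rmin_pos; lra). lra. }
  set (eps := eta * (1 - c) / 2).
  assert (Heps : 0 < eps) by (unfold eps; nra).
  assert (Heps2 : eps < eta) by (unfold eps; nra).
  destruct (Uset_ne x (Om_K x Hx)) as [r0 Hr0].
  destruct (u_approx x r0 Hr0 eps Heps) as [r1 [[y [T [ga [Hy [Hadm ->]]]]] Hr1]].
  pose proof (adm_len X d Om y x T ga Hadm) as HTl.
  assert (Hdxy : rho <= d x y).
  { apply Rnot_lt_le. intro Hlt. apply bnd_iff in Hy as [_ Hny]. apply Hny, Hb; auto. }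
  rewrite ds in HTl.
  pose proof Hadm as [HT0 [Hl [Hcl [H0 [H1 _]]]]].
  set (z := ga (T - eta)).
  assert (Hz : Uset z (g y + (T - eta))).
  { exists y, (T - eta), ga. split; auto. split; auto. apply adm_restr with x T; auto. lra. }
  pose proof (u_le z _ Hz).
  assert (Hdz : d x z <= eta).
  { rewrite <- H1. unfold z. eapply Rle_trans. apply Hl; lra. rewrite Rabs_right; lra. }
  assert (Hpos : 0 < d x z).
  { destruct (dpos x z) as [|Heq]; auto. exfalso. symmetry in Heq. apply (d_eq X d Hm) in Heq.
    rewrite <- Heq in H. lra. }
  exists z. split; [apply Hcl; lra|split; [lra|]].
  assert (c * d x z <= c * eta) by (apply Rmult_le_compat_l; lra).
  unfold eps in *. nra.
Qed.

Lemma u_slope_le x : Om x -> forall c, 1 < c -> exists r, 0 < r /\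
  forall z, K z -> 0 < d x z < r -> u x - u z <= c * d x z.
Proof.
  intros Hx c Hc1. apply NNPP. intro Hn.
  assert (Hbad : forall r, 0 < r -> exists z, K z /\ 0 < d x z < r /\ c * d x z < u x - u z).
  { intros r Hr. apply NNPP. intro Hn'. apply Hn. exists r. split; auto. intros z Kz Hd.
    apply Rnot_lt_le. intro. apply Hn'. exists z. auto. }
  destruct (HO x Hx) as [rho0 [Hrho0 Hb]].
  set (rho := rho0 / 2). set (dlt := rho / 2).
  assert (Hrho : 0 < rho /\ rho < rho0 /\ 0 < dlt /\ dlt < rho) by (unfold dlt, rho; lra).
  set (Om' := fun q => d x q < rho /\ u x - dlt < u q).
  assert (HOm' : nonempty_proper_open X d Om').
  { split; [|split].
    - intros q [Hq1 Hq2]. assert (Hq : Om q) by (apply Hb; lra).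
      destruct (u_cont_int q Hq (u q - (u x - dlt)) ltac:(lra)) as [dq [Hdq Hcq]].
      exists (Rmin dq (rho - d x q)). split. apply Rmin_pos; lra.
      intros y Hy. pose proof (Rmin_l dq (rho - d x q)). pose proof (Rmin_r dq (rho - d x q)).
      pose proof (dt x q y). assert (d x y < rho) by lra.
      split; auto. specialize (Hcq y (Om_K y (Hb y ltac:(lra))) ltac:(lra)).
      apply Rabs_def2 in Hcq. lra.
    - exists x. split. rewrite dr. lra. lra.
    - pose proof HOm as [_ [_ [a0 Ha0]]]. exists a0. intros [Ha1 _]. apply Ha0, Hb. lra. }
  destruct (HE Om' HOm') as [v [Hv [Hsl Hv0]]].
  assert (clOm' : forall q, closure X d Om' q -> d x q <= rho /\ Om q /\ u x - dlt <= u q).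
  { intros q Hq.
    assert (Hd : d x q <= rho).
    { apply le_eps. intros e He. destruct (Hq e He) as [y [[Hy1 _] Hy]].
      pose proof (dt x y q). rewrite (ds y q) in H. lra. }
    assert (Hoq : Om q) by (apply Hb; lra).
    split; [auto|split; [auto|]].
    apply le_eps. intros e He. destruct (u_cont_int q Hoq e He) as [d1 [Hd1 Hc1']].
    destruct (Hq d1 Hd1) as [y [[Hy1 Hy2] Hy]].
    specialize (Hc1' y (Om_K y (Hb y ltac:(lra))) Hy). apply Rabs_def2 in Hc1'. lra. }
  assert (HOm'Om : forall q, Om' q -> Om q) by (intros q [Hq _]; apply Hb; lra).
  assert (Hva : dlt <= v x).
  { apply le_eps. intros e He. set (c0 := dlt / (dlt + e)).
    assert (Hc0 : 0 < c0 < 1).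
    { unfold c0. split. apply Rdiv_lt_0_compat; lra. apply Rlt_div_l; lra. }
    assert (Hxo : Om' x) by (split; [rewrite dr|]; lra).
    destruct (E10_descent X d Hm Hc Om' v (proj1 HOm') Hv Hsl c0 Hc0 x Hxo)
      as [b [T [be [Hbb [Hadm HT]]]]].
    rewrite (Hv0 b Hbb) in HT.
    pose proof Hbb as Hbb'. apply (boundary_iff X d Hm Om' b (proj1 HOm')) in Hbb' as [Hbc Hbn].
    destruct (clOm' b Hbc) as [Hb1 [Hb2 Hb3]].
    assert (HTd : dlt <= T).
    { destruct (Rlt_dec (d x b) rho) as [Hlt|Hge].
      - assert (u b <= u x - dlt) by (apply Rnot_lt_le; intro; apply Hbn; split; auto).
        assert (Hadm' : admissible_curve X d Om b x T be).
        { apply adm_mono with Om'; auto. intros z Hz. apply Om_K. apply clOm'; auto. }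
        pose proof (u_concat b x T be (Om_K b Hb2) Hadm'). lra.
      - pose proof (adm_len X d Om' b x T be Hadm). rewrite ds in H. lra. }
    assert (dlt - c0 * dlt = e * (dlt / (dlt + e))) by (unfold c0; field; lra).
    assert (dlt / (dlt + e) <= 1) by (apply Rle_div_l; lra).
    assert (c0 * dlt <= c0 * T) by (apply Rmult_le_compat_l; lra).
    nra. }
  assert (Hvb : forall z, Om' z -> v z <= u z - u x + dlt).
  { intros z Hz. apply le_eps. intros e He.
    destruct (Uset_ne z (Om_K z (HOm'Om z Hz))) as [r0 Hr0].
    destruct (u_approx z r0 Hr0 e He) as [r [[y [T1 [ga [Hy [Hadm ->]]]]] Hr]].
    pose proof Hadm as [HT0 [Hl [_ [H0 [H1 _]]]]].
    assert (Hny : ~ Om' (ga 0)).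
    { rewrite H0. intro Hy'. apply bnd_iff in Hy as [_ Hny]. apply Hny, HOm'Om; auto. }
    destruct (last_exit X d Hm Om' T1 ga (proj1 HOm') HT0 Hl Hny ltac:(rewrite H1; auto))
      as [sg [Hsg [Hbs Hadm2]]].
    pose proof (E10_lip X d Hm Om' v _ _ _ _ Hv Hsl Hadm2 ltac:(rewrite H1; auto)) as Hl2.
    rewrite (Hv0 _ Hbs), H1 in Hl2.
    assert (Hus : Uset (ga sg) (g y + sg)).
    { exists y, sg, ga. split; auto. split; auto. apply adm_restr with z T1; auto. lra. }
    pose proof (u_le _ _ Hus).
    pose proof Hbs as Hbs'. apply (boundary_iff X d Hm Om' _ (proj1 HOm')) in Hbs' as [Hbc _].
    destruct (clOm' _ Hbc) as [_ [_ Hu3]].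
    lra. }
  assert (Hxo : Om' x) by (split; [rewrite dr|]; lra).
  destruct (slope_le X d Om' v x (Hsl x Hxo) ((1 + c) / 2) ltac:(lra)) as [r1 [Hr1 Hr1']].
  destruct (u_cont_int x Hx dlt ltac:(lra)) as [du [Hdu Hcu]].
  destruct (Hbad (Rmin r1 (Rmin rho du))) as [z [Kz [Hdz Hcz]]].
  { repeat apply Rmin_pos; lra. }
  pose proof (Rmin_l r1 (Rmin rho du)). pose proof (Rmin_r r1 (Rmin rho du)).
  pose proof (Rmin_l rho du). pose proof (Rmin_r rho du).
  specialize (Hcu z Kz ltac:(lra)). apply Rabs_def2 in Hcu.
  assert (Hz' : Om' z) by (split; lra).
  specialize (Hr1' z (closure_incl X d Hm _ _ Hz') ltac:(lra)).
  specialize (Hvb z Hz').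
  nra.
Qed.
End Main.

Theorem proposition5p4 (X : Type) (d : X -> X -> R) :
  is_metric X d -> compact_space X d -> E10_property X d -> E1g_property X d.
Proof.
  intros Hm Hc HE Om HOm g Hgb Hgc HCC.
  exists (u X d Om g). split; [|split].
  - intros x Kx e He. destruct (classic (Om x)) as [Hx|Hx].
    + eapply u_cont_int; eauto.
    + eapply u_cont_bnd; eauto.
      apply (boundary_iff X d Hm Om x (proj1 HOm)). auto.
  - intros x Hx. apply slope_eq.
    + eapply u_slope_ge; eauto.
    + eapply u_slope_le; eauto.
  - intros x Hx. eapply u_bnd; eauto.
Qed.
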